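(* In the setting described in the context, with all standing assumptions in force, for every $i\in\{1,\dots,N\}$: $$\lim_{t\to\infty}\|\mathbf x_{(i,:)}^t-\bar{\mathbf s}^t\|=0,\qquad \sum_{t=0}^\infty\gamma^t\|\mathbf x_{(i,:)}^t-\bar{\mathbf s}^t\|<\infty,\qquad \sum_{t=0}^\infty\|\mathbf x_{(i,:)}^t-\bar{\mathbf s}^t\|^2<\infty.$$
   Context: Problem. Let $N,B,d\ge1$. A vector $\mathbf x\in\mathbb R^{dB}$ is partitioned into blocks $\mathbf x=(\mathbf x_1,\dots,\mathbf x_B)$ with $\mathbf x_\ell\in\mathbb R^d$, and $\nabla_\ell$ denotes the partial gradient with respect to block $\ell$. Problem (P) is $$\min_{\mathbf x}\ U(\mathbf x)=\sum_{i=1}^Nf_i(\mathbf x)+\sum_{\ell=1}^B r_\ell(\mathbf x_\ell)\quad\text{s.t. }\mathbf x_\ell\in\mathcal K_\ell,\ \ell=1,\dots,B,$$ with $\mathcal K=\mathcal K_1\times\dots\times\mathcal K_B$. Problem assumptions: - each $\mathcal K_\ell\subseteq\mathbb R^d$ is nonempty, closed and convex; - each $f_i:\mathbb R^{dB}\to\mathbb R$ is $C^1$ on an open set containing $\mathcal K$, and $\nabla f_i$ is $L_i$-Lipschitz continuous and bounded on $\mathcal K$; - each $r_\ell:\mathbb R^d\to\mathbb R$ is convex with bounded subgradients on $\mathcal K_\ell$; - $U$ is coercive on $\mathcal K$. Network. $\mathcal G=(\{1,\dots,N\},\mathcal E)$ is a fixed, strongly connected digraph containing all self-loops. The in-neighbor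 set of $i$ is $\mathcal N_i=\{j:(j,i)\in\mathcal E\}$. Block selection. At each iteration $t\ge0$, agent $i$ picks $\ell_i^t\in\{1,\dots,B\}$. For each $i$ there is a finite $T_i>0$ with $\bigcup_{\tau=0}^{T_i-1}\{\ell_i^{t+\tau}\}=\{1,\dots,B\}$ for all $t\ge0$. Define $\mathcal N_{i,\ell}^t=\{j\in\mathcal N_i:\ell_j^t=\ell\}\cup\{i\}$ and $\mathcal E_\ell^t=\{(j,i)\in\mathcal E:j\in\mathcal N_{i,\ell}^t\}$. Weights. For each $\ell$ and $t$, $A_\ell^t=[a_{ij\ell}^t]$ satisfies $a_{ij\ell}^t>\kappa$ if $(j,i)\in\mathcal E_\ell^t$, $a_{ij\ell}^t=0$ otherwise (for a fixed $\kappa>0$), and $\mathbf 1^\top A_\ell^t=\mathbf 1^\top$. Surrogates. For each $i,\ell$, $\tilde f_{i,\ell}:\mathcal K_\ell\times\mathcal K\to\mathbb R$ satisfies: - $\tilde f_{i,\ell}(\cdot;\mathbf x)$ is $C^1$ and $\tau_i$-strongly convex on $\mathcal K_\ell$ uniformly in $\mathbf x\in\mathcal K$, with $\tau_i>0$; - $\nabla\tilde f_{i,\ell}(\mathbf x_\ell;\mathbf x)=\nabla_\ell f_i(\mathbf x)$ for all $\mathbf x\in\mathcal K$, where $\nabla\tilde f_{i,\ell}$ is the gradient in the first argument and $\mathbf x_\ell$ is the $\ell$-th block of $\mathbf x$; - $\nabla\tilde f_{i,\ell}(\mathbf z;\cdot)$ is Lipschitz continuous on $\mathcal K$ uniformly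 in $\mathbf z\in\mathcal K_\ell$. For $\mathbf w\in\mathcal K$ and $\mathbf g\in\mathbb R^d$ let $$\hat f_{i,\ell}(\mathbf z;\mathbf w,\mathbf g)=\tilde f_{i,\ell}(\mathbf z;\mathbf w)+(N\mathbf g-\nabla_\ell f_i(\mathbf w))^\top(\mathbf z-\mathbf w_\ell).$$ Step sizes. $0<\gamma^t\le1$, $\gamma^{t+1}\le\gamma^t$, $\sum_t\gamma^t=\infty$, $\sum_t(\gamma^t)^2<\infty$. Algorithm. Agent $i$ holds $\mathbf x_{(i,:)}^t=(\mathbf x_{(i,\ell)}^t)_\ell$, $\mathbf y_{(i,:)}^t=(\mathbf y_{(i,\ell)}^t)_\ell$ in $\mathbb R^{dB}$ and scalars $\phi_{(i,\ell)}^t$. Initialization: $\mathbf x_{(i,:)}^0\in\mathcal K$ arbitrary, $\mathbf y_{(i,:)}^0=\nabla f_i(\mathbf x_{(i,:)}^0)$, $\phi_{(i,\ell)}^0=1$. At iteration $t$, each agent $i$: - computes $\tilde{\mathbf x}_{(i,\ell_i^t)}^t=\arg\min_{\mathbf z\in\mathcal K_{\ell_i^t}}\hat f_{i,\ell_i^t}(\mathbf z;\mathbf x_{(i,:)}^t,\mathbf y_{(i,\ell_i^t)}^t)+r_{\ell_i^t}(\mathbf z)$; - sets $\Delta\mathbf x_{(i,\ell)}^t=\tilde{\mathbf x}_{(i,\ell)}^t-\mathbf x_{(i,\ell)}^t$ if $\ell=\ell_i^t$ and $\Delta\mathbf x_{(i,\ell)}^t=\mathbf 0$ otherwise; - for every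 $\ell$ updates $$\phi_{(i,\ell)}^{t+1}=\sum_{j\in\mathcal N_{i,\ell}^t}a_{ij\ell}^t\phi_{(j,\ell)}^t,\qquad \mathbf x_{(i,\ell)}^{t+1}=\sum_{j\in\mathcal N_{i,\ell}^t}\frac{a_{ij\ell}^t\phi_{(j,\ell)}^t}{\phi_{(i,\ell)}^{t+1}}\big(\mathbf x_{(j,\ell)}^t+\gamma^t\Delta\mathbf x_{(j,\ell)}^t\big),$$ $$\mathbf y_{(i,\ell)}^{t+1}=\sum_{j\in\mathcal N_{i,\ell}^t}\frac{a_{ij\ell}^t}{\phi_{(i,\ell)}^{t+1}}\Big(\phi_{(j,\ell)}^t\mathbf y_{(j,\ell)}^t+\nabla_\ell f_j(\mathbf x_{(j,:)}^{t+1})-\nabla_\ell f_j(\mathbf x_{(j,:)}^t)\Big).$$ Weighted average: $\bar{\mathbf s}^t=\frac1N\big(\sum_{i=1}^N\phi_{(i,\ell)}^t\mathbf x_{(i,\ell)}^t\big)_{\ell=1}^B$. *)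

(* Defs.v *)
(* All indices are 0-based. *)
From Stdlib Require Import Reals.
From HB Require Import structures.
From mathcomp Require Import all_boot.

Set Implicit Arguments.
Unset Strict Implicit.
Unset Printing Implicit Defensive.

Local Open Scope R_scope.

HB.instance Definition _ := Monoid.isComLaw.Build R R0 Rplus
  (fun a b c => esym (Rplus_assoc a b c)) Rplus_comm Rplus_0_l.

Definition blk (d : nat) := 'I_d -> R.
(* a full vector in R^{dB} = (R^d)^B, block l, coordinate k *)
Definition pt (d B : nat) := 'I_B -> 'I_d -> R.

Definition dotd {d} (u v : blk d) : R := \big[Rplus/0]_(k < d) (u k * v k).
Definition normd {d} (u : blk d) : R := sqrt (dotd u u).
Definition subd {d} (u v : blk d) : blk d := fun k => u k - v k.
Definition addd {d} (u v : blk d) : blk d := fun k => u k + v k.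
Definition scald {d} (a : R) (u : blk d) : blk d := fun k => a * u k.

Definition dotP {d B} (x y : pt d B) : R :=
  \big[Rplus/0]_(l < B) dotd (x l) (y l).
Definition normP {d B} (x : pt d B) : R := sqrt (dotP x x).
Definition subP {d B} (x y : pt d B) : pt d B := fun l k => x l k - y l k.

Section Generic.
Variables (V : Type) (dot : V -> V -> R) (sub : V -> V -> V).
Let nrm (v : V) := sqrt (dot v v).

Definition is_open (O : V -> Prop) : Prop :=
  forall x, O x -> exists eps, 0 < eps /\ forall y, nrm (sub y x) < eps -> O y.

Definition seq_cv (u : nat -> V) (v : V) : Prop :=
  forall eps, 0 < eps -> exists M, forall n, (M <= n)%nat -> nrm (sub (u n) v) < eps.

Definition is_closed (S : V -> Prop) : Prop :=
  forall (u : nat -> V) v, (forall n, S (u n)) -> seq_cv u v -> S v.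

Definition has_gradient_at (f : V -> R) (g : V -> V) (x : V) : Prop :=
  forall eps, 0 < eps -> exists delta, 0 < delta /\
    forall y, nrm (sub y x) < delta ->
      Rabs (f y - f x - dot (g x) (sub y x)) <= eps * nrm (sub y x).

Definition continuous_on (O : V -> Prop) (g : V -> V) : Prop :=
  forall x, O x -> forall eps, 0 < eps -> exists delta, 0 < delta /\
    forall y, O y -> nrm (sub y x) < delta -> nrm (sub (g y) (g x)) < eps.

Definition C1_near (S : V -> Prop) (f : V -> R) (g : V -> V) : Prop :=
  exists O : V -> Prop, is_open O /\ (forall x, S x -> O x) /\
    (forall x, O x -> has_gradient_at f g x) /\ continuous_on O g.
End Generic.

Definition convex_set {d} (S : blk d -> Prop) : Prop :=
  forall u v a, S u -> S v -> 0 <= a <= 1 ->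
    S (addd (scald a u) (scald (1 - a) v)).

Definition convex_fun {d} (r : blk d -> R) : Prop :=
  forall u v a, 0 <= a <= 1 ->
    r (addd (scald a u) (scald (1 - a) v)) <= a * r u + (1 - a) * r v.

Definition strongly_convex_on {d} (S : blk d -> Prop) (tau : R) (h : blk d -> R)
  : Prop :=
  forall u v a, S u -> S v -> 0 <= a <= 1 ->
    h (addd (scald a u) (scald (1 - a) v))
      <= a * h u + (1 - a) * h v - tau / 2 * a * (1 - a) * (normd (subd u v)) ^ 2.

Definition is_subgradient {d} (r : blk d -> R) (u g : blk d) : Prop :=
  forall w, r u + dotd g (subd w u) <= r w.

Definition bounded_subgradients_on {d} (S : blk d -> Prop) (r : blk d -> R) : Prop :=
  exists M, forall u g, S u -> is_subgradient r u g -> normd g <= M.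

Definition inK {d B} (K : 'I_B -> blk d -> Prop) (x : pt d B) : Prop :=
  forall l, K l (x l).

(* E j i means (j,i) is an edge, i.e. j is an in-neighbour of i.
   strongly connected: a directed path from every node to every node. *)
Definition strongly_connected {N} (E : rel 'I_N) : Prop :=
  forall i j, connect E i j.

Definition inNil {N B} (E : rel 'I_N) (sel : nat -> 'I_N -> 'I_B)
  (t : nat) (i : 'I_N) (l : 'I_B) (j : 'I_N) : bool :=
  (E j i && (sel t j == l)) || (j == i).

Definition dx {d B N} (sel : nat -> 'I_N -> 'I_B) (x : nat -> 'I_N -> pt d B)
  (xt : nat -> 'I_N -> blk d) (t : nat) (j : 'I_N) (l : 'I_B) : blk d :=
  if l == sel t j then subd (xt t j) (x t j l) else (fun _ => 0).

Definition sbar {d B N} (phi : nat -> 'I_N -> 'I_B -> R)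
  (x : nat -> 'I_N -> pt d B) (t : nat) : pt d B :=
  fun l k => / INR N * \big[Rplus/0]_(i < N) (phi t i l * x t i l k).

Definition psum (u : nat -> R) (n : nat) : R := sum_f_R0 u n.

Definition fhat {d B N} (ft : 'I_N -> 'I_B -> blk d -> pt d B -> R)
  (gf : 'I_N -> pt d B -> pt d B) (i : 'I_N) (l : 'I_B)
  (z : blk d) (w : pt d B) (g : blk d) : R :=
  ft i l z w + dotd (subd (scald (INR N) g) (gf i w l)) (subd z (w l)).

Definition Uobj {d B N} (f : 'I_N -> pt d B -> R) (r : 'I_B -> blk d -> R)
  (x : pt d B) : R :=
  \big[Rplus/0]_(i < N) f i x + \big[Rplus/0]_(l < B) r l (x l).

(* Main.v *)
Require Import Defs.
From Stdlib Require Import Reals Lra Psatz FunctionalExtensionality.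
From HB Require Import structures.
From mathcomp Require Import all_boot.
From mathcomp Require Import zify.
Set Implicit Arguments.
Unset Strict Implicit.
Local Open Scope R_scope.

Lemma bigR_scal (I : Type) (r : seq I) (P : pred I) (F : I -> R) c :
  c * \big[Rplus/0]_(i <- r | P i) F i = \big[Rplus/0]_(i <- r | P i) (c * F i).
Proof.
elim/big_rec2: _ => [|i y1 y2 _ <-]; first by rewrite Rmult_0_r.
by rewrite Rmult_plus_distr_l.
Qed.

Lemma bigR_scalr (I : Type) (r : seq I) (P : pred I) (F : I -> R) c :
  \big[Rplus/0]_(i <- r | P i) F i * c = \big[Rplus/0]_(i <- r | P i) (F i * c).
Proof.
rewrite Rmult_comm bigR_scal; apply: eq_bigr => i _; apply Rmult_comm.
Qed.

Lemma bigR_le (I : Type) (r : seq I) (P : pred I) (F G : I -> R) :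
  (forall i, P i -> F i <= G i) ->
  \big[Rplus/0]_(i <- r | P i) F i <= \big[Rplus/0]_(i <- r | P i) G i.
Proof.
move=> H; elim/big_rec2: _ => [|i y1 y2 Pi Hy]; first lra.
by have := H i Pi; lra.
Qed.

Lemma bigR_ge0 (I : Type) (r : seq I) (P : pred I) (F : I -> R) :
  (forall i, P i -> 0 <= F i) -> 0 <= \big[Rplus/0]_(i <- r | P i) F i.
Proof.
move=> H; elim/big_rec: _ => [|i y Pi Hy]; first lra.
by have := H i Pi; lra.
Qed.

Lemma bigR_abs (I : Type) (r : seq I) (P : pred I) (F : I -> R) :
  Rabs (\big[Rplus/0]_(i <- r | P i) F i) <= \big[Rplus/0]_(i <- r | P i) Rabs (F i).
Proof.
apply: (big_rec2 (fun y1 y2 => Rabs y1 <= y2)) => [|i y1 y2 Pi Hy]; first by rewrite Rabs_R0; lra.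
by have := Rabs_triang (F i) y1; lra.
Qed.

Lemma bigR_term (I : finType) (P : pred I) (F : I -> R) j :
  (forall i, P i -> 0 <= F i) -> P j -> F j <= \big[Rplus/0]_(i | P i) F i.
Proof.
move=> H Pj; rewrite (bigD1 j Pj) /=.
have : 0 <= \big[Rplus/0]_(i | P i && (i != j)) F i.
  by apply: bigR_ge0 => i /andP [Pi _]; apply: H.
lra.
Qed.

Lemma bigR_mkcond0 (I : finType) (P : pred I) (F : I -> R) :
  (forall i, ~~ P i -> F i = 0) ->
  \big[Rplus/0]_(i | P i) F i = \big[Rplus/0]_i F i.
Proof.
move=> H; rewrite big_mkcond; apply: eq_bigr => i _.
by case: ifP => // /negbT /H ->.
Qed.

Lemma bigR_cst0 (I : Type) (r : seq I) (P : pred I) :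
  \big[Rplus/0]_(i <- r | P i) (0:R) = 0.
Proof. elim/big_rec: _ => [|i y _ ->]; lra. Qed.



(* nonneg version carried in the invariant *)
Lemma sqrt_bigR_le (I : Type) (r : seq I) (P : pred I) (F : I -> R) :
  (forall i, P i -> 0 <= F i) ->
  sqrt (\big[Rplus/0]_(i <- r | P i) F i) <= \big[Rplus/0]_(i <- r | P i) sqrt (F i).
Proof.
move=> H.
enough (Hc : 0 <= \big[Rplus/0]_(i <- r | P i) F i /\
  sqrt (\big[Rplus/0]_(i <- r | P i) F i) <= \big[Rplus/0]_(i <- r | P i) sqrt (F i)) by apply Hc.
apply: (big_rec2 (fun y1 y2 => 0 <= y1 /\ sqrt y1 <= y2)) => [|i y1 y2 Pi [Hy0 Hy]]; first by rewrite sqrt_0; lra.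
have Fi := H i Pi; split; first lra.
have h1 : sqrt (F i + y1) <= sqrt (F i) + sqrt y1.
  apply: Rsqr_incr_0_var; last by have := sqrt_pos (F i); have := sqrt_pos y1; lra.
  rewrite Rsqr_sqrt; last lra.
  rewrite /Rsqr; have := sqrt_sqrt (F i) Fi; have := sqrt_sqrt y1 Hy0.
  have := sqrt_pos (F i); have := sqrt_pos y1; nra.
lra.
Qed.

Lemma dotd_ge0 d (u : blk d) : 0 <= dotd u u.
Proof. by apply: bigR_ge0 => k _; nra. Qed.

Lemma normd_ge0 d (u : blk d) : 0 <= normd u.
Proof. exact: sqrt_pos. Qed.

Lemma normd_sq d (u : blk d) : normd u * normd u = dotd u u.
Proof. by rewrite /normd sqrt_sqrt //; apply dotd_ge0. Qed.

Lemma abs_le_normd d (u : blk d) k : Rabs (u k) <= normd u.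
Proof.
rewrite /normd -sqrt_Rsqr_abs; apply: sqrt_le_1_alt.
rewrite /dotd /Rsqr; apply: (@bigR_term _ xpredT (fun k => u k * u k)) => // i _; nra.
Qed.

Lemma normd_le_sum d (u : blk d) : normd u <= \big[Rplus/0]_(k < d) Rabs (u k).
Proof.
rewrite /normd /dotd.
apply: Rle_trans; first by apply: sqrt_bigR_le => i _; nra.
apply: bigR_le => k _; rewrite -(sqrt_Rsqr_abs (u k)) /Rsqr; lra.
Qed.

Lemma dotP_ge0 d B (u : pt d B) : 0 <= dotP u u.
Proof. by apply: bigR_ge0 => l _; apply dotd_ge0. Qed.

Lemma normP_ge0 d B (u : pt d B) : 0 <= normP u.
Proof. exact: sqrt_pos. Qed.

Lemma normP_sq d B (u : pt d B) : normP u ^ 2 = dotP u u.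
Proof. by rewrite /normP /= Rmult_1_r sqrt_sqrt //; apply dotP_ge0. Qed.

Lemma abs_le_normP d B (u : pt d B) l k : Rabs (u l k) <= normP u.
Proof.
rewrite /normP -sqrt_Rsqr_abs; apply: sqrt_le_1_alt.
apply: Rle_trans (_ : dotd (u l) (u l) <= _).
  rewrite /dotd /Rsqr; apply: (@bigR_term _ xpredT (fun k => u l k * u l k)) => // i _; nra.
apply: (@bigR_term _ xpredT (fun l => dotd (u l) (u l))) => // i _; apply dotd_ge0.
Qed.

Lemma normP_le_sum d B (u : pt d B) :
  normP u <= \big[Rplus/0]_(l < B) \big[Rplus/0]_(k < d) Rabs (u l k).
Proof.
rewrite /normP /dotP.
apply: Rle_trans; first by apply: sqrt_bigR_le => i _; apply dotd_ge0.
apply: bigR_le => l _; apply: normd_le_sum.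
Qed.

Lemma dotd_expand d (u v : blk d) c :
  dotd (fun k => u k - c * v k) (fun k => u k - c * v k) =
  dotd u u - 2 * c * dotd u v + c * c * dotd v v.
Proof.
rewrite /dotd.
have -> : \big[Rplus/0]_(k < d) ((u k - c * v k) * (u k - c * v k)) =
  \big[Rplus/0]_(k < d) (u k * u k + ((- (2 * c)) * (u k * v k) + (c * c) * (v k * v k))).
  by apply: eq_bigr => k _; ring.
rewrite !big_split /= -!bigR_scal; ring.
Qed.

Lemma cauchy_schwarz d (u v : blk d) : Rabs (dotd u v) <= normd u * normd v.
Proof.
have H c := dotd_expand u v c.
have H0 c : 0 <= dotd u u - 2 * c * dotd u v + c * c * dotd v v.
  by rewrite -H; apply dotd_ge0.
have Hu := normd_sq u; have Hv := normd_sq v.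
have nu := normd_ge0 u; have nv := normd_ge0 v.
have Hsq : dotd u v * dotd u v <= dotd u u * dotd v v.
  case: (Req_dec (dotd v v) 0) => Hvv.
  - have Huv : dotd u v = 0.
      apply: Rle_antisym; apply: Rnot_lt_le => Hlt.
      + have := H0 ((dotd u u + 1) / (2 * dotd u v)); rewrite Hvv.
        have Hn : 2 * ((dotd u u + 1) / (2 * dotd u v)) * dotd u v = dotd u u + 1 by field; lra.
        rewrite Rmult_0_r Rplus_0_r Hn; lra.
      + have := H0 ((dotd u u + 1) / (2 * dotd u v)); rewrite Hvv.
        have Hn : 2 * ((dotd u u + 1) / (2 * dotd u v)) * dotd u v = dotd u u + 1 by field; lra.
        rewrite Rmult_0_r Rplus_0_r Hn; lra.
    rewrite Huv Hvv; lra.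
  - have Hpos : 0 < dotd v v by have := dotd_ge0 v; lra.
    have := H0 (dotd u v / dotd v v).
    have -> : dotd u u - 2 * (dotd u v / dotd v v) * dotd u v +
      dotd u v / dotd v v * (dotd u v / dotd v v) * dotd v v =
      dotd u u - dotd u v * dotd u v / dotd v v by field; lra.
    move=> h; have : dotd u v * dotd u v / dotd v v <= dotd u u by lra.
    move=> h2; have := Rmult_le_compat_r (dotd v v) _ _ (Rlt_le _ _ Hpos) h2.
    by rewrite /Rdiv Rmult_assoc Rinv_l; lra.
apply: Rsqr_incr_0_var; last nra.
rewrite /Rsqr -Rabs_mult Rabs_pos_eq; nra.
Qed.

Lemma fext_app d (T : Type) (r : blk d -> T) (u v : blk d) :
  (forall k, u k = v k) -> r u = r v.
Proof. by move=> H; f_equal; apply functional_extensionality. Qed.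

Lemma dotd_lin d (g u w : blk d) a b :
  dotd g (fun i => a * u i + b * w i) = a * dotd g u + b * dotd g w.
Proof.
rewrite /dotd !bigR_scal -big_split /=; apply: eq_bigr => i _; ring.
Qed.

Lemma sum_delta (I : finType) (e : I) (F : I -> R) :
  \big[Rplus/0]_i (if i == e then F i else 0) = F e.
Proof. by rewrite -big_mkcond big_pred1_eq. Qed.

Lemma dotd_zero d (g : blk d) : dotd g (fun _ => 0) = 0.
Proof.
rewrite /dotd (eq_bigr (fun _ => 0)) ?bigR_cst0 // => i _; ring.
Qed.

Section HB.
Variable d : nat.
Variable q : blk d -> R.
Hypothesis qext : forall u v : blk d, (forall k, u k = v k) -> q u = q v.
Hypothesis q0 : q (fun _ => 0) = 0.
Hypothesis qconv : forall u w a, 0 <= a <= 1 ->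
  q (fun k => a * u k + (1-a) * w k) <= a * q u + (1-a) * q w.

Definition suppk (k : nat) (v : blk d) := forall i : 'I_d, (k <= i)%nat -> v i = 0.

Lemma hb_step k (Hk : (k < d)%nat) g : (forall v, suppk k v -> dotd g v <= q v) ->
  exists g', forall v, suppk k.+1 v -> dotd g' v <= q v.
Proof.
move=> Hg.
pose e : 'I_d := Ordinal Hk.
pose ev (i : 'I_d) : R := if i == e then 1 else 0.
have key : forall m m' s t, suppk k m -> suppk k m' -> 0 < s -> 0 < t ->
  t * (dotd g m' - q (fun i => m' i - s * ev i)) <=
  s * (q (fun i => m i + t * ev i) - dotd g m).
  move=> m m' s t Hm Hm' Hs Ht.
  pose a := t / (s + t).
  have Ha : 0 <= a <= 1.
    rewrite /a; split; first by apply: Rle_mult_inv_pos; lra.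
    apply: (Rmult_le_reg_r (s + t)); first lra.
    rewrite /Rdiv Rmult_assoc Rinv_l; lra.
  have hc := qconv (fun i => m' i - s * ev i) (fun i => m i + t * ev i) Ha.
  have harg : forall i, a * (m' i - s * ev i) + (1 - a) * (m i + t * ev i) =
      a * m' i + (1 - a) * m i.
    by move=> i; rewrite /a; field; lra.
  rewrite (qext (v := fun i => a * m' i + (1 - a) * m i)) // in hc.
  have hs : suppk k (fun i => a * m' i + (1 - a) * m i).
    by move=> i Hi; rewrite Hm // Hm' //; ring.
  have hg := Hg _ hs; rewrite dotd_lin in hg.
  have h1 : a * dotd g m' + (1 - a) * dotd g m <=
      a * q (fun i => m' i - s * ev i) + (1 - a) * q (fun i => m i + t * ev i) by lra.
  have h2 := Rmult_le_compat_l (s + t) _ _ (ltac:(lra) : 0 <= s + t) h1.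
  have e1 : forall X Y, (s + t) * (a * X + (1 - a) * Y) = t * X + s * Y.
    by move=> X Y; rewrite /a; field; lra.
  rewrite !e1 in h2; lra.
have hzero : suppk k (fun _ => 0) by [].
pose E z := exists m s, suppk k m /\ 0 < s /\
  z = (dotd g m - q (fun i => m i - s * ev i)) / s.
have Hb : bound E.
  exists (q (fun i => 0 + 1 * ev i) - dotd g (fun _ => 0)) => z [m [s [Hm [Hs ->]]]].
  have := key _ _ _ _ hzero Hm Hs Rlt_0_1.
  move=> h; apply: (Rmult_le_reg_r s) => //.
  rewrite /Rdiv Rmult_assoc Rinv_l; lra.
have Hne : exists z, E z by exists ((dotd g (fun _ => 0) - q (fun i => 0 - 1 * ev i)) / 1),
  (fun _ => 0), 1; split => //; split => //; lra.
case: (@completeness E Hb Hne) => c [Hc1 Hc2].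
have Hup : forall m t, suppk k m -> 0 < t -> c <= (q (fun i => m i + t * ev i) - dotd g m) / t.
  move=> m t Hm Ht; apply: Hc2 => z [m' [s [Hm' [Hs ->]]]].
  have := key _ _ _ _ Hm Hm' Hs Ht => h.
  apply: (Rmult_le_reg_r (s * t)); first nra.
  have -> : (dotd g m' - q (fun i => m' i - s * ev i)) / s * (s * t) =
    t * (dotd g m' - q (fun i => m' i - s * ev i)) by field; lra.
  have -> : (q (fun i => m i + t * ev i) - dotd g m) / t * (s * t) =
    s * (q (fun i => m i + t * ev i) - dotd g m) by field; lra.
  done.
have Hlow : forall m s, suppk k m -> 0 < s -> (dotd g m - q (fun i => m i - s * ev i)) / s <= c.
  by move=> m s Hm Hs; apply: Hc1; exists m, s.
exists (fun i => if i == e then c else g i) => v Hv.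
pose m (i : 'I_d) := if i == e then 0 else v i.
have Hm : suppk k m.
  move=> i Hi; rewrite /m; case: ifP => // /negbT Hie; apply: Hv.
  have : (nat_of_ord i != k) by apply: contra Hie => /eqP Hik; apply/eqP/val_inj.
  lia.
pose t := v e.
have Hdot : dotd (fun i => if i == e then c else g i) v = dotd g m + c * t.
  rewrite /dotd -(sum_delta e (fun _ => c * t)) -big_split /=.
  apply: eq_bigr => i _; rewrite /m; case: eqP => [->|_]; rewrite /t; ring.
have Hv' : forall s, (fun i => m i + s * ev i) = (fun i => m i + s * ev i) by [].
have Hmv : forall i, m i + t * ev i = v i.
  by move=> i; rewrite /m /ev /t; case: eqP => [->|_]; ring.
rewrite Hdot.
case: (Rtotal_order t 0) => [Htn|[Ht0|Htp]].
- have := Hlow m (- t) Hm (ltac:(lra)).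
  rewrite (qext (v := v)); last by move=> i; rewrite -Hmv; ring.
  move=> h.
  have := Rmult_le_compat_r (- t) _ _ (ltac:(lra) : 0 <= - t) h.
  rewrite /Rdiv Rmult_assoc Rinv_l; lra.
- rewrite Ht0 Rmult_0_r Rplus_0_r.
  rewrite (qext (v := m)); first by apply: Hg.
  by move=> i; rewrite -Hmv Ht0; ring.
- have := Hup m t Hm Htp.
  rewrite (qext (u := fun i => m i + t * ev i) (v := v)) //.
  move=> h.
  have := Rmult_le_compat_r t _ _ (ltac:(lra) : 0 <= t) h.
  rewrite /Rdiv Rmult_assoc Rinv_l; lra.
Qed.

Lemma hb_all k : (k <= d)%nat -> exists g, forall v, suppk k v -> dotd g v <= q v.
Proof.
elim: k => [_|k IH Hk].
  exists (fun _ => 0) => v Hv.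
  rewrite (qext (u := v) (v := fun _ => 0)); last by move=> i; apply: Hv.
  rewrite q0 /dotd (eq_bigr (fun _ => 0)) ?bigR_cst0; first lra.
  by move=> i _; ring.
have [g Hg] := IH (ltnW Hk).

exact: (@hb_step k Hk g Hg).
Qed.

Lemma hb_full : exists g, forall v, dotd g v <= q v.
Proof.
have [g Hg] := hb_all (leqnn d).
by exists g => v; apply: Hg => i Hi; have := ltn_ord i; lia.
Qed.
End HB.

Lemma subgrad_exists d (r : blk d -> R) (x : blk d) :
  convex_fun r -> exists g, is_subgradient r x g.
Proof.
move=> Hr.
pose q (v : blk d) := r (fun k => x k + v k) - r x.
have qext : forall u v : blk d, (forall k, u k = v k) -> q u = q v.
  by move=> u v H; rewrite /q (fext_app r (v := fun k => x k + v k)) // => k; rewrite H.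
have q0 : q (fun _ => 0) = 0.
  by rewrite /q (fext_app r (v := x)); [ring | move=> k; ring].
have qconv : forall u w a, 0 <= a <= 1 ->
    q (fun k => a * u k + (1-a) * w k) <= a * q u + (1-a) * q w.
  move=> u w a Ha; rewrite /q.
  have := Hr (fun k => x k + u k) (fun k => x k + w k) a Ha.
  rewrite (fext_app r (u := addd _ _) (v := fun k => x k + (a * u k + (1 - a) * w k))).
    lra.
  by move=> k; rewrite /addd /scald; ring.
have [g Hg] := hb_full qext q0 qconv.
exists g => w; have := Hg (subd w x); rewrite /q.
rewrite (fext_app r (v := w)); first lra.
by move=> k; rewrite /subd; ring.
Qed.

Lemma dotd_extr d (g w w' : blk d) : (forall k, w k = w' k) -> dotd g w = dotd g w'.
Proof. by move=> H; rewrite /dotd; apply: eq_bigr => k _; rewrite H. Qed.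

Lemma dotd_addl d (g g' w : blk d) : dotd g w + dotd g' w = dotd (fun k => g k + g' k) w.
Proof. by rewrite /dotd -big_split; apply: eq_bigr => k _ /=; ring. Qed.

Lemma normd_scal d (w : blk d) a : 0 <= a -> normd (fun k => a * w k) = a * normd w.
Proof.
move=> Ha; rewrite /normd /dotd.
rewrite (eq_bigr (fun k => (a * a) * (w k * w k))); last by move=> k _; ring.
rewrite -bigR_scal sqrt_mult; [|nra|apply: (dotd_ge0 w)].
by rewrite sqrt_square.
Qed.


Lemma dx_bound d (Kl : blk d -> Prop) (h : blk d -> R) (gh : blk d -> blk d) tau
  (rl : blk d -> R) Mr (c : blk d) u v :
  0 < tau -> C1_near dotd subd Kl h gh -> strongly_convex_on Kl tau h ->
  convex_fun rl -> (forall z g, Kl z -> is_subgradient rl z g -> normd g <= Mr) ->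
  Kl u -> Kl v ->
  h u + dotd c (subd u v) + rl u <= h v + dotd c (subd v v) + rl v ->
  normd (subd u v) <= 4 * (normd (fun k => gh v k + c k) + 1 + Mr) / tau.
Proof.
move=> Htau [O [_ [HKO [Hgrad _]]]] Hsc Hrc HMr Ku Kv Hopt.
set w := subd u v; set rho := normd w.
have rho0 : 0 <= rho := normd_ge0 w.
have [g Hg] := subgrad_exists v Hrc.
have Mr0 : normd g <= Mr := HMr v g Kv Hg.
have ng0 := normd_ge0 g.
have nG0 := normd_ge0 (fun k => gh v k + c k).
have Hvv : dotd c (subd v v) = 0.
  by rewrite (dotd_extr _ (w' := fun _ => 0)) ?dotd_zero // => k; rewrite /subd; ring.
have Hr1 : rl u >= rl v - Mr * rho.
  have := Hg u; have := cauchy_schwarz g w; rewrite -/w => hcs.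
  move=> hg.
  have hab := Rle_abs (- dotd g w).
  rewrite Rabs_Ropp in hab.
  have : - (normd g * rho) <= dotd g w.
    rewrite /rho; lra.
  have : normd g * rho <= Mr * rho by apply: Rmult_le_compat_r.
  lra.
have [delta [Hdel Hdelta]] := Hgrad v (HKO v Kv) 1 Rlt_0_1.
case: (Req_dec rho 0) => Hrho0.
  rewrite -/w -/rho Hrho0; apply: Rmult_le_pos; [lra|].
  by apply: Rlt_le; apply: Rinv_0_lt_compat.
have rhop : 0 < rho by lra.
pose a := Rmin (1/2) (delta / (2 * rho)).
have Ha0 : 0 < a.
  rewrite /a; apply: Rmin_pos; first lra.
  by apply: Rdiv_lt_0_compat; lra.
have Ha1 : a <= 1/2 by apply: Rmin_l.
have Ha2 : a * rho < delta.
  have : a <= delta / (2 * rho) by apply: Rmin_r.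
  move=> hh; have := Rmult_le_compat_r rho _ _ rho0 hh.
  have -> : delta / (2 * rho) * rho = delta / 2 by field; lra.
  lra.
set y := addd (scald a u) (scald (1 - a) v).
have Hyv : forall k, subd y v k = a * w k.
  by move=> k; rewrite /y /addd /scald /subd /w /subd; ring.
have Hny : normd (subd y v) = a * rho.
  rewrite /normd (dotd_extr _ (w' := fun k => a * w k)) // /dotd.
  rewrite (eq_bigr (fun k => (a * w k) * subd y v k)); last by move=> k _; rewrite Hyv.
  rewrite (eq_bigr (fun k => (a * w k) * (a * w k))); last by move=> k _; rewrite Hyv.
  by have := normd_scal w (Rlt_le _ _ Ha0).
have Hdy : dotd (gh v) (subd y v) = a * dotd (gh v) w.
  rewrite (dotd_extr _ (w' := fun k => a * w k + 0 * w k)); last by move=> k; rewrite Hyv; ring.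
  rewrite dotd_lin; ring.
have Hgr := Hdelta y (ltac:(rewrite -/(normd (subd y v)) Hny; lra)).
rewrite -/(normd (subd y v)) Hny Hdy in Hgr.
have Hsc1 := Hsc u v a Ku Kv (ltac:(lra)).
rewrite -/y -/w -/rho in Hsc1.
have Hgr2 : h y - h v - a * dotd (gh v) w >= - (1 * (a * rho)).
  by have := Rle_abs (- (h y - h v - a * dotd (gh v) w)); rewrite Rabs_Ropp; lra.
have Hfo : a * (h u - h v) >= a * (dotd (gh v) w - rho + tau / 4 * rho ^ 2).
  have : tau / 2 * a * (1 - a) * rho ^ 2 >= a * (tau / 4 * rho ^ 2).
    have : 0 <= a * (tau * rho ^ 2) by apply: Rmult_le_pos; [lra|]; nra.
    nra.
  lra.
have Hfo2 : h u - h v >= dotd (gh v) w - rho + tau / 4 * rho ^ 2.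
  apply: Rle_ge; apply: (Rmult_le_reg_l a) => //; lra.
have Hcs2 : - (normd (fun k => gh v k + c k) * rho) <= dotd (fun k => gh v k + c k) w.
  have := cauchy_schwarz (fun k => gh v k + c k) w; rewrite -/w -/rho => h1.
  have := Rle_abs (- dotd (fun k => gh v k + c k) w); rewrite Rabs_Ropp; lra.
rewrite -dotd_addl in Hcs2.
have Hq : tau / 4 * rho ^ 2 <= (normd (fun k => gh v k + c k) + 1 + Mr) * rho.
  rewrite -/w in Hopt; lra.
have : tau / 4 * rho <= normd (fun k => gh v k + c k) + 1 + Mr.
  apply: (Rmult_le_reg_r rho) => //; nra.
move=> h1; apply: (Rmult_le_reg_r tau) => //.
rewrite /Rdiv Rmult_assoc Rinv_l; lra.
Qed.

Lemma fin_boundR (I : finType) (Q : I -> R -> Prop) :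
  (forall i M M', M <= M' -> Q i M -> Q i M') -> (forall i, exists M, Q i M) ->
  exists M, forall i, Q i M.
Proof.
move=> Hm Hex.
suff [M HM] : exists M, forall i, i \in enum I -> Q i M.
  by exists M => i; apply: HM; rewrite mem_enum.
elim: (enum I) => [|a s [M HM]]; first by exists 0.
have [Ma HMa] := Hex a.
exists (Rmax Ma M) => i; rewrite inE => /orP [/eqP ->|Hi].
  by apply: Hm HMa; apply: Rmax_l.
by apply: Hm (HM i Hi); apply: Rmax_r.
Qed.

Lemma fin_boundN (I : finType) (Q : I -> nat -> Prop) :
  (forall i M M', (M <= M')%nat -> Q i M -> Q i M') -> (forall i, exists M, Q i M) ->
  exists M, forall i, Q i M.
Proof.
move=> Hm Hex.
suff [M HM] : exists M, forall i, i \in enum I -> Q i M.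
  by exists M => i; apply: HM; rewrite mem_enum.
elim: (enum I) => [|a s [M HM]]; first by exists 0%nat.
have [Ma HMa] := Hex a.
exists (maxn Ma M) => i; rewrite inE => /orP [/eqP ->|Hi].
  by apply: Hm HMa; apply: leq_maxl.
by apply: Hm (HM i Hi); apply: leq_maxr.
Qed.

Definition fmax (I : finType) (i0 : I) (f : I -> R) : R :=
  foldr (fun i m => Rmax (f i) m) (f i0) (enum I).
Definition fmin (I : finType) (i0 : I) (f : I -> R) : R := - fmax i0 (fun i => - f i).

Lemma fmax_ge (I : finType) (i0 : I) (f : I -> R) i : f i <= fmax i0 f.
Proof.
rewrite /fmax; have : i \in enum I by rewrite mem_enum.
elim: (enum I) => [//|a s IH]; rewrite inE => /orP [/eqP ->|Hi] /=.
  by apply: Rmax_l.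
by apply: Rle_trans (IH Hi) _; apply: Rmax_r.
Qed.

Lemma fmax_ex (I : finType) (i0 : I) (f : I -> R) : exists j, fmax i0 f = f j.
Proof.
rewrite /fmax; elim: (enum I) => [|a s [j Hj]] /=; first by exists i0.
rewrite Hj; case: (Rle_dec (f a) (f j)) => h.
  by exists j; rewrite Rmax_right.
by exists a; rewrite Rmax_left //; lra.
Qed.

Lemma fmin_le (I : finType) (i0 : I) (f : I -> R) i : fmin i0 f <= f i.
Proof. by rewrite /fmin; have := fmax_ge i0 (fun i => - f i) i; lra. Qed.

Lemma fmin_ex (I : finType) (i0 : I) (f : I -> R) : exists j, fmin i0 f = f j.
Proof. by have [j Hj] := fmax_ex i0 (fun i => - f i); exists j; rewrite /fmin Hj; ring. Qed.

Section Reach.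
Variables (N B : nat) (E : rel 'I_N) (sel : nat -> 'I_N -> 'I_B) (l : 'I_B) (T : nat).
Hypothesis HE : strongly_connected E.
Hypothesis HT : forall i t, exists tau, (tau < T)%nat /\ sel (t + tau)%nat i = l.

Lemma inNil_self s i : inNil E sel s i l i.
Proof. by rewrite /inNil eqxx orbT. Qed.

Lemma reach t j0 (Q : nat -> 'I_N -> Prop) :
  Q t j0 ->
  (forall s i j, (t <= s)%nat -> Q s j -> inNil E sel s i l j -> Q s.+1 i) ->
  forall i, Q (t + N * T)%nat i.
Proof.
move=> Q0 Hstep.
have persist : forall k s i, (t <= s)%nat -> Q s i -> Q (s + k)%nat i.
  elim=> [s i _ H|k IH s i Hs H]; first by rewrite addn0.
  rewrite addnS; apply: (Hstep _ _ i) => //; first lia.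
  - by apply: IH.
  - exact: inNil_self.
have spread : forall s i j, (t <= s)%nat -> Q s j -> E j i -> Q (s + T)%nat i.
  move=> s i j Hs Hj Eji.
  have [tau [Htau Hsel]] := HT j s.
  have H1 : Q (s + tau)%nat j by apply: persist.
  have H2 : Q (s + tau).+1 i.
    apply: (Hstep _ _ j) => //; first lia.
    by rewrite /inNil Eji Hsel eqxx.
  have -> : (s + T = (s + tau).+1 + (T - tau.+1))%nat by lia.
  by apply: persist => //; lia.
have Hpath : forall p j s, (t <= s)%nat -> Q s j -> path E j p ->
    Q (s + size p * T)%nat (last j p).
  elim=> [|a p IH] j s Hs Hj /=; first by rewrite mul0n addn0.
  move=> /andP [Eja Hp].
  have := IH a (s + T)%nat (ltac:(lia)) (spread _ _ _ Hs Hj Eja) Hp.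
  by rewrite mulSn addnA.
move=> i.
have /connectP [p Hp ->] := HE j0 i.
case: (shortenP Hp) => p' Hp' Hu _.
have Hsz : (size (j0 :: p') <= N)%nat.
  have := uniq_leq_size (s2 := enum 'I_N) Hu (fun x _ => mem_enum _ x).
  by rewrite size_enum_ord.
have := Hpath p' j0 t (leqnn t) Q0 Hp'.
move=> H; have -> : (t + N * T = (t + size p' * T) + (N * T - size p' * T))%nat.
  have : (size p' * T <= N * T)%nat by apply: leq_mul => //=; simpl in Hsz; lia.
  lia.
apply: persist => //; lia.
Qed.
End Reach.

Lemma conv_le (I : finType) (P : pred I) (w x : I -> R) U :
  (forall j, P j -> 0 <= w j) -> \big[Rplus/0]_(j | P j) w j = 1 ->
  (forall j, P j -> x j <= U) -> \big[Rplus/0]_(j | P j) (w j * x j) <= U.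
Proof.
move=> Hw H1 Hx.
apply: Rle_trans (_ : \big[Rplus/0]_(j | P j) (w j * U) <= _).
  by apply: bigR_le => j Pj; apply: Rmult_le_compat_l; auto.
by rewrite -bigR_scalr H1; lra.
Qed.

Lemma conv_ge (I : finType) (P : pred I) (w x : I -> R) U :
  (forall j, P j -> 0 <= w j) -> \big[Rplus/0]_(j | P j) w j = 1 ->
  (forall j, P j -> U <= x j) -> U <= \big[Rplus/0]_(j | P j) (w j * x j).
Proof.
move=> Hw H1 Hx.
apply: Rle_trans (_ : \big[Rplus/0]_(j | P j) (w j * U) <= _).
  by rewrite -bigR_scalr H1; lra.
by apply: bigR_le => j Pj; apply: Rmult_le_compat_l; auto.
Qed.

Section Spread.
Variables (N : nat) (i0 : 'I_N) (P : nat -> 'I_N -> 'I_N -> bool)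
  (w : nat -> 'I_N -> 'I_N -> R) (v e : nat -> 'I_N -> R) (eb : nat -> R)
  (eps : R) (T0 : nat).
Hypothesis Hw1 : forall s i, \big[Rplus/0]_(j | P s i j) w s i j = 1.
Hypothesis Hweps : forall s i j, P s i j -> eps <= w s i j.
Hypothesis Heps : 0 < eps <= 1.
Hypothesis Hv : forall s i, v s.+1 i = \big[Rplus/0]_(j | P s i j) (w s i j * (v s j + e s j)).
Hypothesis He : forall s j, Rabs (e s j) <= eb s.
Hypothesis Hreach : forall t j0 (Q : nat -> 'I_N -> Prop), Q t j0 ->
  (forall s i j, (t <= s)%nat -> Q s j -> P s i j -> Q s.+1 i) -> forall i, Q (t + T0)%nat i.

Definition Mx s := fmax i0 (v s).
Definition Mn s := fmin i0 (v s).
Definition Dsp s := Mx s - Mn s.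

Lemma w_ge0 s i j : P s i j -> 0 <= w s i j.
Proof. by move=> H; have := Hweps H; lra. Qed.

Lemma e_le s j : e s j <= eb s.
Proof. by have := Rle_abs (e s j); have := He s j; lra. Qed.
Lemma e_ge s j : - eb s <= e s j.
Proof. by have := Rle_abs (- e s j); rewrite Rabs_Ropp; have := He s j; lra. Qed.

Lemma Mx_step s : Mx s.+1 <= Mx s + eb s.
Proof.
rewrite {1}/Mx; have [j ->] := fmax_ex i0 (v s.+1); rewrite Hv.
apply: conv_le => //; first exact: w_ge0.
by move=> k _; have := fmax_ge i0 (v s) k; have := e_le s k; rewrite /Mx; lra.
Qed.

Lemma Mn_step s : Mn s - eb s <= Mn s.+1.
Proof.
rewrite {2}/Mn; have [j ->] := fmin_ex i0 (v s.+1); rewrite Hv.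
apply: conv_ge => //; first exact: w_ge0.
by move=> k _; have := fmin_le i0 (v s) k; have := e_ge s k; rewrite /Mn; lra.
Qed.

Lemma Dsp_ge0 s : 0 <= Dsp s.
Proof. by have := fmax_ge i0 (v s) i0; have := fmin_le i0 (v s) i0; rewrite /Dsp /Mx /Mn; lra. Qed.

Lemma Dsp_step s : Dsp s.+1 <= Dsp s + 2 * eb s.
Proof. by have := Mx_step s; have := Mn_step s; rewrite /Dsp; lra. Qed.

Definition Sb t k := \big[Rplus/0]_(u < k) eb (t + u)%nat.

Lemma Sb_S t k : Sb t k.+1 = Sb t k + eb (t + k)%nat.
Proof. by rewrite /Sb big_ord_recr. Qed.

Lemma Mx_cum t k : Mx (t + k)%nat <= Mx t + Sb t k.
Proof.
elim: k => [|k IH]; first by rewrite addn0 /Sb big_ord0; lra.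
by rewrite addnS Sb_S; have := Mx_step (t + k); lra.
Qed.

Lemma Mn_cum t k : Mn t - Sb t k <= Mn (t + k)%nat.
Proof.
elim: k => [|k IH]; first by rewrite addn0 /Sb big_ord0; lra.
by rewrite addnS Sb_S; have := Mn_step (t + k); lra.
Qed.

Lemma Dsp_window t : Dsp (t + T0)%nat <= (1 - eps ^ T0) * Dsp t + 2 * Sb t T0.
Proof.
have [j0 Hj0] := fmax_ex i0 (v t).
pose Q s i := exists k, s = (t + k)%nat /\ v s i - (Mn t - Sb t k) >= eps ^ k * Dsp t.
have Q0 : Q t j0.
  exists 0%nat; rewrite addn0 /Sb big_ord0 /= -Hj0 /Dsp /Mx; split => //; lra.
have Hall := Hreach Q0.
have HQ : forall i, Q (t + T0)%nat i.
  apply: Hall => s i j Hts [k [-> Hk]] Pij.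
  exists k.+1; split; first by rewrite addnS.
  have Hb : forall j', Mn t - Sb t k <= v (t + k)%nat j'.
    by move=> j'; have := Mn_cum t k; have := fmin_le i0 (v (t + k)%nat) j'; rewrite /Mn; lra.
  rewrite Hv Sb_S.
  have Hw1' := Hw1 (t + k)%nat i.
  have Hdiff : \big[Rplus/0]_(j1 | P (t + k)%nat i j1)
      (w (t + k)%nat i j1 * (v (t + k)%nat j1 + e (t + k)%nat j1)) - ((Mn t - Sb t k) - eb (t + k)%nat)
    = \big[Rplus/0]_(j1 | P (t + k)%nat i j1)
      (w (t + k)%nat i j1 * (v (t + k)%nat j1 + e (t + k)%nat j1 - (Mn t - Sb t k) + eb (t + k)%nat)).
    have : \big[Rplus/0]_(j1 | P (t + k)%nat i j1)
      (w (t + k)%nat i j1 * (v (t + k)%nat j1 + e (t + k)%nat j1 - (Mn t - Sb t k) + eb (t + k)%nat)) =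
      \big[Rplus/0]_(j1 | P (t + k)%nat i j1)
      (w (t + k)%nat i j1 * (v (t + k)%nat j1 + e (t + k)%nat j1)) +
      \big[Rplus/0]_(j1 | P (t + k)%nat i j1) (w (t + k)%nat i j1) * (- (Mn t - Sb t k) + eb (t + k)%nat).
      rewrite bigR_scalr -big_split /=; apply: eq_bigr => j1 _; ring.
    by rewrite Hw1'; lra.
  have Hterm := @bigR_term _ (P (t + k)%nat i)
    (fun j1 => w (t + k)%nat i j1 * (v (t + k)%nat j1 + e (t + k)%nat j1 - (Mn t - Sb t k) + eb (t + k)%nat)) j.
  have Hnn : forall j1, P (t + k)%nat i j1 ->
      0 <= w (t + k)%nat i j1 * (v (t + k)%nat j1 + e (t + k)%nat j1 - (Mn t - Sb t k) + eb (t + k)%nat).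
    move=> j1 Pj1; apply: Rmult_le_pos; first exact: w_ge0.
    have h1 := Hb j1.
    have h2 := e_ge (t + k)%nat j1.
    lra.
  have Ht := Hterm Hnn Pij.
  have Hwij := Hweps Pij.
  have Hej := e_ge (t + k)%nat j.
  have HD := Dsp_ge0 t.
  have Hek : 0 <= eps ^ k by apply: pow_le; lra.
  have : w (t + k)%nat i j * (v (t + k)%nat j + e (t + k)%nat j - (Mn t - Sb t k) + eb (t + k)%nat)
      >= eps * (eps ^ k * Dsp t).
    have h1 : v (t + k)%nat j + e (t + k)%nat j - (Mn t - Sb t k) + eb (t + k)%nat >= eps ^ k * Dsp t by lra.
    have h2 : 0 <= eps ^ k * Dsp t by apply: Rmult_le_pos.
    apply: Rle_ge; apply: Rle_trans (_ : eps * (v (t + k)%nat j + e (t + k)%nat j - (Mn t - Sb t k) + eb (t + k)%nat) <= _).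
      by apply: Rmult_le_compat_l; lra.
    by apply: Rmult_le_compat_r; [lra|].
  move=> Hlast.
  have Hp : eps ^ k.+1 * Dsp t = eps * (eps ^ k * Dsp t) by rewrite /= Rmult_assoc.
  rewrite Hp; lra.
have [imin Himin] := fmin_ex i0 (v (t + T0)%nat).
have [k [Hk Hq]] := HQ imin.
have HkT : k = T0 by lia.
subst k.
have Hmn : Mn (t + T0)%nat = v (t + T0)%nat imin by rewrite /Mn Himin.
have := Mx_cum t T0.
rewrite /Dsp in Hq *; rewrite Hmn; lra.
Qed.
End Spread.

Lemma psum_S u n : psum u n.+1 = psum u n + u n.+1.
Proof. by []. Qed.

Lemma psum_le (u v : nat -> R) n : (forall t, u t <= v t) -> psum u n <= psum v n.
Proof.
move=> H; elim: n => [|n IH]; first by apply: H.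
by rewrite !psum_S; have := H n.+1; lra.
Qed.

Lemma psum_ge0 (u : nat -> R) n : (forall t, 0 <= u t) -> 0 <= psum u n.
Proof.
move=> H; elim: n => [|n IH]; first by apply: H.
by rewrite psum_S; have := H n.+1; lra.
Qed.

Lemma psum_grow (u : nat -> R) : (forall t, 0 <= u t) -> Un_growing (psum u).
Proof. by move=> H n; rewrite psum_S; have := H n.+1; lra. Qed.

Lemma psum_mono (u : nat -> R) m n : (forall t, 0 <= u t) -> (m <= n)%nat -> psum u m <= psum u n.
Proof.
move=> H /subnK <-; elim: (n - m)%nat => [|k IH]; first by rewrite add0n; lra.
by rewrite addSn psum_S; have := H (k + m).+1; lra.
Qed.

Lemma psum_lin (u v : nat -> R) a b n :
  psum (fun t => a * u t + b * v t) n = a * psum u n + b * psum v n.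
Proof.
elim: n => [|n IH].
  rewrite /psum /=. reflexivity.
rewrite !psum_S IH; ring.
Qed.

Lemma psum_shift (f : nat -> R) P m :
  psum f (m + P.+1)%nat = psum f P + psum (fun t => f (t + P.+1)%nat) m.
Proof.
elim: m => [|m IH].
  rewrite add0n psum_S /psum /= add0n. reflexivity.
by rewrite addSn psum_S IH psum_S /= addSn; lra.
Qed.

Lemma bounded_cv (u : nat -> R) G : (forall t, 0 <= u t) -> (forall n, psum u n <= G) ->
  exists s, Un_cv (psum u) s.
Proof.
move=> H HG.
have Hub : has_ub (psum u) by exists G => x [i ->]; apply: HG.
have [s Hs] := growing_cv (psum u) (psum_grow H) Hub.
by exists s.
Qed.

Lemma cv_bound (u : nat -> R) s n : (forall t, 0 <= u t) -> Un_cv (psum u) s -> psum u n <= s.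
Proof. by move=> H Hs; apply: growing_ineq => //; apply: psum_grow. Qed.

Lemma compare_cv (u v : nat -> R) : (forall t, 0 <= u t) -> (forall t, u t <= v t) ->
  (exists s, Un_cv (psum v) s) -> exists s, Un_cv (psum u) s.
Proof.
move=> H Huv [s Hs].
have Hv : forall t, 0 <= v t by move=> t; have := H t; have := Huv t; lra.
apply: (bounded_cv (G := s)) => // n.
by apply: Rle_trans (psum_le n Huv) (cv_bound n Hv Hs).
Qed.

Lemma sum_rec (f g : nat -> R) P rho G :
  0 < rho <= 1 -> (forall t, 0 <= f t) -> (forall t, 0 <= g t) ->
  (forall n, psum g n <= G) ->
  (forall t, f (t + P.+1)%nat <= (1 - rho) * f t + g t) ->
  exists s, Un_cv (psum f) s.
Proof.
move=> Hrho Hf Hg HG Hrec.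
have G0 : 0 <= G by have := HG 0%nat; have := psum_ge0 0 Hg; lra.
have HP0 : 0 <= psum f P by apply: psum_ge0.
apply: (bounded_cv (G := (psum f P + G) / rho)) => // n.
have Hbig : forall m, psum f (m + P.+1)%nat <= (psum f P + G) / rho.
  move=> m.
  have Hs := psum_shift f P m.
  have H1 : psum (fun t => f (t + P.+1)%nat) m <= (1 - rho) * psum f m + psum g m.
    rewrite -(Rmult_1_l (psum g m)) -psum_lin.
    by apply: psum_le => t; have := Hrec t; lra.
  have H2 : psum f m <= psum f (m + P.+1)%nat by apply: psum_mono => //; lia.
  have H3 := HG m.
  apply: (Rmult_le_reg_r rho); first lra.
  rewrite /Rdiv Rmult_assoc Rinv_l; last lra.
  have : (1 - rho) * psum f m <= (1 - rho) * psum f (m + P.+1)%nat by apply: Rmult_le_compat_l; lra.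
  nra.
case: (leqP P.+1 n) => Hn.
  by have := Hbig (n - P.+1)%nat; rewrite subnK.
apply: Rle_trans (_ : psum f (0 + P.+1)%nat <= _); last by apply: Hbig.
by apply: psum_mono => //; lia.
Qed.

Lemma cv_terms0 (u : nat -> R) s : Un_cv (psum u) s -> Un_cv u 0.
Proof.
move=> Hs eps Heps.
have [N0 HN0] := Hs (eps / 2) (ltac:(lra)).
exists N0.+1 => n Hn.
have Hn1 : (n = (n.-1).+1)%nat by lia.
have h1 := HN0 n (ltac:(lia)).
have h2 := HN0 n.-1 (ltac:(lia)).
rewrite /R_dist in h1 h2 |- *; rewrite Hn1 psum_S in h1.
rewrite Hn1 Rminus_0_r.
have := Rabs_triang (psum u n.-1 + u n.-1.+1 - s) (- (psum u n.-1 - s)).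
rewrite Rabs_Ropp.
have -> : psum u n.-1 + u n.-1.+1 - s + - (psum u n.-1 - s) = u n.-1.+1 by ring.
lra.
Qed.

Lemma C_ext d (C : blk d -> Prop) (u v : blk d) : (forall k, u k = v k) -> C u -> C v.
Proof. by move=> H; rewrite (functional_extensionality u v H). Qed.



Lemma sum0_each (I : eqType) (s : seq I) (P : pred I) (w : I -> R) :
  (forall j, P j -> 0 <= w j) -> \big[Rplus/0]_(j <- s | P j) w j = 0 ->
  forall j, j \in s -> P j -> w j = 0.
Proof.
move=> Hw; elim: s => [|a s IH] //.
rewrite big_cons => Hs j; rewrite inE => /orP [/eqP ->|Hj] Pj.
  move: Hs; rewrite Pj; have := bigR_ge0 s Hw; have := Hw a Pj; lra.
case: (boolP (P a)) => Pa; [rewrite Pa in Hs|rewrite (negbTE Pa) in Hs].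
  have := bigR_ge0 s Hw; have := Hw a Pa => h1 h2.
  by apply: IH => //; lra.
by apply: IH.
Qed.

Lemma conv_comb d (C : blk d -> Prop) (I : eqType) (s : seq I) (P : pred I)
  (w : I -> R) (p : I -> blk d) :
  convex_set C -> (forall j, P j -> 0 <= w j) ->
  \big[Rplus/0]_(j <- s | P j) w j = 1 -> (forall j, P j -> C (p j)) ->
  C (fun k => \big[Rplus/0]_(j <- s | P j) (w j * p j k)).
Proof.
move=> HC Hw; elim: s w Hw => [|a s IH] w Hw; first by rewrite big_nil; lra.
rewrite big_cons => H1 Hp.
case: (boolP (P a)) => Pa; [rewrite Pa in H1|rewrite (negbTE Pa) in H1]; last first.
  by apply: C_ext (IH w Hw H1 Hp) => k; rewrite big_cons (negbTE Pa).
have [W HWe] : exists W, \big[Rplus/0]_(j <- s | P j) w j = W by eexists.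
rewrite HWe in H1.
have W0 : 0 <= W by rewrite -HWe; apply: bigR_ge0.
have wa := Hw a Pa.
case: (Req_dec W 0) => HW.
  have Hz := sum0_each Hw (etrans HWe HW).
  apply: C_ext (Hp a Pa) => k; rewrite big_cons Pa.
  rewrite big_seq_cond (eq_bigr (fun _ => 0)); last first.
    by move=> j /andP [Hj Pj]; rewrite Hz // Rmult_0_l.
  rewrite bigR_cst0; have -> : w a = 1 by lra.
  ring.
have Hw' : forall j, P j -> 0 <= w j / W.
  by move=> j Pj; apply: Rle_mult_inv_pos; [apply: Hw|lra].
have H1' : \big[Rplus/0]_(j <- s | P j) (w j / W) = 1.
  rewrite -bigR_scalr HWe; field; lra.
have Hq := IH _ Hw' H1' Hp.
have Ha : 0 <= w a <= 1 by lra.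
have := HC _ _ _ (Hp a Pa) Hq Ha.
apply: C_ext => k; rewrite /addd /scald big_cons Pa.
have -> : 1 - w a = W by lra.
rewrite bigR_scal; congr (_ + _); apply: eq_bigr => j _; field; lra.
Qed.

Lemma avg_close N (p v : 'I_N -> R) D i :
  (forall j, 0 <= p j) -> \big[Rplus/0]_j p j = INR N -> 0 < INR N ->
  (forall j, Rabs (v i - v j) <= D) ->
  Rabs (v i - / INR N * \big[Rplus/0]_j (p j * v j)) <= D.
Proof.
move=> Hp Hs HN HD.
have -> : v i - / INR N * \big[Rplus/0]_j (p j * v j) =
    / INR N * \big[Rplus/0]_j (p j * (v i - v j)).
  have -> : \big[Rplus/0]_j (p j * (v i - v j)) =
    \big[Rplus/0]_j p j * v i - \big[Rplus/0]_j (p j * v j).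
    rewrite bigR_scalr.
    have -> : \big[Rplus/0]_j (p j * v i) =
      \big[Rplus/0]_j (p j * (v i - v j)) + \big[Rplus/0]_j (p j * v j).
      by rewrite -big_split; apply: eq_bigr => j _ /=; ring.
    ring.
  rewrite Hs; field; lra.
rewrite Rabs_mult Rabs_pos_eq; last by apply: Rlt_le; apply: Rinv_0_lt_compat.
apply: Rle_trans (_ : / INR N * \big[Rplus/0]_j (p j * D) <= _).
  apply: Rmult_le_compat_l; first by apply: Rlt_le; apply: Rinv_0_lt_compat.
  apply: Rle_trans (bigR_abs _ _ _) _.
  apply: bigR_le => j _; rewrite Rabs_mult Rabs_pos_eq //.
  by apply: Rmult_le_compat_l.
rewrite -bigR_scalr Hs; right; field; lra.
Qed.

Lemma sum_const_ord n c : \big[Rplus/0]_(u < n) c = INR n * c.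
Proof.
elim: n => [|n IH]; first by rewrite big_ord0 /=; ring.
rewrite big_ord_recr IH S_INR /=; ring.
Qed.

Lemma bnd_rec (D : nat -> R) c c' rho T0 :
  0 < rho <= 1 -> 0 <= c -> 0 <= c' -> 0 <= D 0%nat ->
  (forall s, D s.+1 <= D s + c) -> (forall t, D (t + T0)%nat <= (1 - rho) * D t + c') ->
  exists Kb, forall t, D t <= Kb.
Proof.
move=> Hrho Hc Hc' HD0 Hs Hw.
have [Kb HKb] : exists Kb, Kb = D 0%nat + INR T0 * c + c' / rho by eexists.
have Hc'r : 0 <= c' / rho by apply: Rle_mult_inv_pos; lra.
have HT0 : 0 <= INR T0 := pos_INR T0.
exists Kb.
have Hsmall : forall t, (t <= T0)%nat -> D t <= D 0%nat + INR t * c.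
  elim=> [_|t IH Ht]; first by rewrite /=; lra.
  rewrite S_INR; have := IH (ltnW Ht); have := Hs t; lra.
elim/ltn_ind => t IH.
case: (leqP T0 t) => Ht.
  have -> : t = ((t - T0) + T0)%nat by rewrite subnK.
  case: (posnP T0) => HT.
    subst T0. rewrite addn0 subn0.
    have h := Hw t; rewrite addn0 in h.
    have h2 : D t <= c' / rho.
      apply: (Rmult_le_reg_l rho); first lra.
      rewrite (_ : rho * (c' / rho) = c'); [lra|field; lra].
    rewrite HKb /=; lra.
  have Hlt : (t - T0 < t)%nat by lia.
  have := IH _ Hlt; have := Hw (t - T0)%nat => h1 h2.
  have h3 : (1 - rho) * D (t - T0)%nat <= (1 - rho) * Kb by apply: Rmult_le_compat_l; lra.
  have : rho * Kb >= c'.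
    rewrite HKb; have : rho * (c' / rho) = c' by field; lra.
    have : 0 <= rho * (D 0%nat + INR T0 * c) by apply: Rmult_le_pos; [lra|]; nra.
    nra.
  nra.
have := Hsmall t (ltnW Ht).
have : INR t * c <= INR T0 * c by apply: Rmult_le_compat_r => //; apply: le_INR; apply/leP; lia.
lra.
Qed.

Lemma pow_le_one (k : R) n : 0 <= k <= 1 -> k ^ n <= 1.
Proof.
move=> Hk; elim: n => [|n IH] /=; first lra.
have : 0 <= k ^ n by apply: pow_le; lra.
nra.
Qed.

Lemma pow_decr (k : R) m n : 0 <= k <= 1 -> (m <= n)%nat -> k ^ n <= k ^ m.
Proof.
move=> Hk /subnK <-; rewrite pow_add.
have h1 : 0 <= k ^ m by apply: pow_le; lra.
have h2 : k ^ (n - m) <= 1 by apply: pow_le_one.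
have h3 : 0 <= k ^ (n - m) by apply: pow_le; lra.
rewrite Rmult_comm; nra.
Qed.

Lemma sum_ones N : \big[Rplus/0]_(i < N) (1:R) = INR N.
Proof. by rewrite sum_const_ord; ring. Qed.

Lemma psum_scal c (u : nat -> R) n : psum (fun t => c * u t) n = c * psum u n.
Proof. by elim: n => [|n IH]; [rewrite /psum /= | rewrite !psum_S IH; ring]. Qed.

Section Main.
Variables (d B N : nat).
Hypothesis HN : (0 < N)%nat.
Variable K : 'I_B -> blk d -> Prop.
Hypothesis HK : forall l, (exists u, K l u) /\ is_closed dotd subd (K l) /\ convex_set (K l).
Variable gf : 'I_N -> pt d B -> pt d B.
Hypothesis Hfb : forall i, exists M, forall x, inK K x -> normP (gf i x) <= M.
Variable r : 'I_B -> blk d -> R.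
Hypothesis Hr : forall l, convex_fun (r l) /\ bounded_subgradients_on (K l) (r l).
Variable E : rel 'I_N.
Hypothesis HE : strongly_connected E.
Variable sel : nat -> 'I_N -> 'I_B.
Variables (kappa : R) (a : nat -> 'I_B -> 'I_N -> 'I_N -> R).
Hypothesis Hkappa : 0 < kappa.
Hypothesis Ha_pos : forall t l i j, inNil E sel t i l j -> kappa < a t l i j.
Hypothesis Ha_zero : forall t l i j, ~~ inNil E sel t i l j -> a t l i j = 0.
Hypothesis Ha_col : forall t l j, \big[Rplus/0]_(i < N) a t l i j = 1.
Variables (ft : 'I_N -> 'I_B -> blk d -> pt d B -> R)
  (gft : 'I_N -> 'I_B -> blk d -> pt d B -> blk d) (tau : 'I_N -> R).
Hypothesis Htau : forall i, 0 < tau i.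
Hypothesis Hft_C1 : forall i l x, inK K x ->
     C1_near dotd subd (K l) (fun z => ft i l z x) (fun z => gft i l z x).
Hypothesis Hft_sc : forall i l x, inK K x ->
     strongly_convex_on (K l) (tau i) (fun z => ft i l z x).
Hypothesis Hft_grad : forall i l x, inK K x -> forall k, gft i l (x l) x k = gf i x l k.
Variable gamma : nat -> R.
Hypothesis Hg_pos : forall t, 0 < gamma t <= 1.
Hypothesis Hg_dec : forall t, gamma (S t) <= gamma t.
Hypothesis Hg_sq : exists s, Un_cv (psum (fun t => gamma t ^ 2)) s.
Variables (x y : nat -> 'I_N -> pt d B) (phi : nat -> 'I_N -> 'I_B -> R)
  (xt : nat -> 'I_N -> blk d).
Hypothesis Hx0 : forall i, inK K (x 0%nat i).
Hypothesis Hy0 : forall i l k, y 0%nat i l k = gf i (x 0%nat i) l k.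
Hypothesis Hphi0 : forall i l, phi 0%nat i l = 1.
Hypothesis Hxt : forall t i,
     K (sel t i) (xt t i) /\
     forall z, K (sel t i) z ->
       fhat ft gf i (sel t i) (xt t i) (x t i) (y t i (sel t i)) + r (sel t i) (xt t i)
       <= fhat ft gf i (sel t i) z (x t i) (y t i (sel t i)) + r (sel t i) z.
Hypothesis Hphi : forall t i l,
     phi (S t) i l = \big[Rplus/0]_(j < N | inNil E sel t i l j) (a t l i j * phi t j l).
Hypothesis Hx : forall t i l k,
     x (S t) i l k = \big[Rplus/0]_(j < N | inNil E sel t i l j)
        (a t l i j * phi t j l / phi (S t) i l *
           (x t j l k + gamma t * dx sel x xt t j l k)).
Hypothesis Hy : forall t i l k,
     y (S t) i l k = \big[Rplus/0]_(j < N | inNil E sel t i l j)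
        (a t l i j / phi (S t) i l *
           (phi t j l * y t j l k + gf j (x (S t) j) l k - gf j (x t j) l k)).

Definition i0 : 'I_N := Ordinal HN.

Lemma a_ge0 t l i j : 0 <= a t l i j.
Proof.
case: (boolP (inNil E sel t i l j)) => H; first by have := Ha_pos H; lra.
by rewrite Ha_zero //; lra.
Qed.

Lemma inNil_refl t i l : inNil E sel t i l i.
Proof. by rewrite /inNil eqxx orbT. Qed.

Lemma kappa_lt1 (l : 'I_B) : kappa < 1.
Proof.
have := Ha_col 0%nat l i0.
have : a 0%nat l i0 i0 <= \big[Rplus/0]_(i < N) a 0%nat l i i0.
  exact: (@bigR_term _ xpredT (fun i => a 0%nat l i i0) i0 (fun i _ => a_ge0 0%nat l i i0) isT).
have := Ha_pos (inNil_refl 0%nat i0 l); lra.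
Qed.

Lemma phi_pos t i l : 0 < phi t i l.
Proof.
elim: t i => [|t IH] i; first by rewrite Hphi0; lra.
rewrite Hphi.
have Hnn : forall j, inNil E sel t i l j -> 0 <= a t l i j * phi t j l.
  by move=> j _; apply: Rmult_le_pos; [apply: a_ge0|apply: Rlt_le].
have : a t l i i * phi t i l <= \big[Rplus/0]_(j < N | inNil E sel t i l j) (a t l i j * phi t j l).
  by apply: bigR_term Hnn (inNil_refl t i l).
have : 0 < a t l i i * phi t i l.
  by apply: Rmult_lt_0_compat; [have := Ha_pos (inNil_refl t i l); lra|apply: IH].
lra.
Qed.

Lemma phi_step_ge t i l j : inNil E sel t i l j -> kappa * phi t j l <= phi t.+1 i l.
Proof.
move=> Hij; rewrite Hphi.
have Hnn : forall j, inNil E sel t i l j -> 0 <= a t l i j * phi t j l.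
  by move=> j' _; apply: Rmult_le_pos; [apply: a_ge0|apply: Rlt_le; apply: phi_pos].
have : a t l i j * phi t j l <= \big[Rplus/0]_(j < N | inNil E sel t i l j) (a t l i j * phi t j l).
  by apply: bigR_term Hnn Hij.
have : kappa * phi t j l <= a t l i j * phi t j l.
  by apply: Rmult_le_compat_r; [apply: Rlt_le; apply: phi_pos|apply: Rlt_le; apply: Ha_pos].
lra.
Qed.

Lemma phi_sum t l : \big[Rplus/0]_(i < N) phi t i l = INR N.
Proof.
elim: t => [|t IH].
  by rewrite (eq_bigr (fun _ => 1)) ?sum_ones // => i _; rewrite Hphi0.
rewrite (eq_bigr (fun i => \big[Rplus/0]_(j < N) (a t l i j * phi t j l))); last first.
  move=> i _; rewrite Hphi; apply: bigR_mkcond0 => j Hj.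
  by rewrite Ha_zero // Rmult_0_l.
rewrite exchange_big /= -IH; apply: eq_bigr => j _.
by rewrite -bigR_scalr Ha_col Rmult_1_l.
Qed.

Lemma phi_leN t i l : phi t i l <= INR N.
Proof.
rewrite -(phi_sum t l).
by apply: (@bigR_term _ xpredT (fun i => phi t i l)) => // j _; apply: Rlt_le; apply: phi_pos.
Qed.

Lemma INR_N_pos : 0 < INR N.
Proof. by apply: lt_0_INR; apply/ltP. Qed.

Definition wgt s l i j := a s l i j * phi s j l / phi s.+1 i l.

Lemma wgt_sum s l i : \big[Rplus/0]_(j < N | inNil E sel s i l j) wgt s l i j = 1.
Proof.
rewrite /wgt /Rdiv -bigR_scalr -Hphi Rinv_r //.
by have := phi_pos s.+1 i l; lra.
Qed.

Lemma x_inK t i : inK K (x t i).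
Proof.
elim: t i => [|t IH] i; first exact: Hx0.
move=> l.
have [_ [_ HC]] := HK l.
apply: (C_ext (u := fun k => \big[Rplus/0]_(j < N | inNil E sel t i l j)
   (wgt t l i j * (x t j l k + gamma t * dx sel x xt t j l k)))); first by move=> k; rewrite Hx.
apply: conv_comb => //.
- move=> j _; rewrite /wgt; apply: Rle_mult_inv_pos; last exact: phi_pos.
  by apply: Rmult_le_pos; [apply: a_ge0|apply: Rlt_le; apply: phi_pos].
- exact: wgt_sum.
- move=> j _; rewrite /dx; case: eqP => [Hl|_].
  + have Hxt1 : K l (xt t j) by rewrite Hl; case: (Hxt t j).
    have Hg := Hg_pos t.
    have := HC _ _ (gamma t) Hxt1 (IH j l) (ltac:(lra)).
    by apply: C_ext => k; rewrite /addd /scald /subd; ring.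
  + by apply: C_ext (IH j l) => k; ring.
Qed.

Section WithT.
Variable Tu : nat.
Hypothesis HTu0 : (0 < Tu)%nat.
Hypothesis HTu : forall i t l, exists tau, (tau < Tu)%nat /\ sel (t + tau)%nat i = l.

Definition eta := kappa ^ (N * Tu).

Lemma kappa01 : 0 <= kappa <= 1.
Proof. have := kappa_lt1 (sel 0%nat i0); lra. Qed.

Lemma eta_pos : 0 < eta.
Proof. by apply: pow_lt. Qed.

Lemma eta_le1 : eta <= 1.
Proof. by apply: pow_le_one; apply: kappa01. Qed.

Lemma phi_ge_pow t i l : kappa ^ t <= phi t i l.
Proof.
elim: t i => [|t IH] i; first by rewrite Hphi0 /=; lra.
apply: Rle_trans (phi_step_ge (inNil_refl t i l)); rewrite /=.
by apply: Rmult_le_compat_l; [lra|apply: IH].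
Qed.

Lemma phi_lb t i l : eta <= phi t i l.
Proof.
case: (ltnP t (N * Tu)) => Ht.
  apply: Rle_trans (phi_ge_pow t i l).
  by apply: pow_decr; [apply: kappa01|apply: ltnW].
have -> : t = ((t - N * Tu) + N * Tu)%nat by rewrite subnK.
set t' := (t - N * Tu)%nat.
have [j0 Hj0] := fmax_ex i0 (fun j => phi t' j l).
have Hj1 : 1 <= phi t' j0 l.
  have : INR N <= INR N * phi t' j0 l.
    rewrite -{1}(phi_sum t' l) -sum_const_ord; apply: bigR_le => j _.
    by rewrite -Hj0; apply: (fmax_ge i0 (fun j => phi t' j l)).
  have := INR_N_pos; nra.
pose Q s i := exists k, s = (t' + k)%nat /\ kappa ^ k * phi t' j0 l <= phi s i l.
have Q0 : Q t' j0 by exists 0%nat; rewrite addn0 /=; split => //; lra.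
have HQ : forall i, Q (t' + N * Tu)%nat i.
  apply: (@reach N B E sel l Tu HE (fun i t => HTu i t l) t' j0 Q Q0).
  move=> s i' j _ [k [Hs Hq]] Hij.
  exists k.+1; split; first by rewrite Hs addnS.
  apply: Rle_trans (phi_step_ge Hij).
  rewrite /= Rmult_assoc; apply: Rmult_le_compat_l; [exact: (proj1 kappa01)|exact: Hq].
have [k [Hk Hq]] := HQ i.
have HkT : k = (N * Tu)%nat by lia.
subst k.
rewrite -/t'; apply: Rle_trans Hq; rewrite /eta.
have : 0 <= kappa ^ (N * Tu) by apply: pow_le; apply: (proj1 kappa01).
nra.
Qed.

Definition epsw := kappa * eta / INR N.

Lemma epsw_bounds : 0 < epsw <= 1.
Proof.
have HN1 : 1 <= INR N by apply: (le_INR 1); apply/leP.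
have He := eta_pos; have He1 := eta_le1; have Hk := kappa01.
rewrite /epsw; split.
  by apply: Rdiv_lt_0_compat; [apply: Rmult_lt_0_compat|apply: INR_N_pos].
apply: (Rmult_le_reg_r (INR N)); first exact: INR_N_pos.
rewrite /Rdiv Rmult_assoc Rinv_l; last by have := INR_N_pos; lra.
have : kappa * eta <= 1 * 1 by apply: Rmult_le_compat; lra.
lra.
Qed.

Lemma wgt_lb s l i j : inNil E sel s i l j -> epsw <= wgt s l i j.
Proof.
move=> Hij; rewrite /epsw /wgt /Rdiv.
have Hp := phi_pos s.+1 i l.
apply: Rmult_le_compat.
- apply: Rmult_le_pos; [apply: (proj1 kappa01)|apply: Rlt_le; apply: eta_pos].
- by apply: Rlt_le; apply: Rinv_0_lt_compat; apply: INR_N_pos.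
- apply: Rmult_le_compat; [apply: (proj1 kappa01)|apply: Rlt_le; apply: eta_pos| |].
  + by apply: Rlt_le; apply: Ha_pos.
  + exact: phi_lb.
- by apply: Rinv_le_contravar => //; apply: phi_leN.
Qed.

Lemma wgt_ge0 s l i j : inNil E sel s i l j -> 0 <= wgt s l i j.
Proof. by move=> H; have := wgt_lb H; have := epsw_bounds; lra. Qed.

Lemma reachT l t j0 (Q : nat -> 'I_N -> Prop) : Q t j0 ->
  (forall s i j, (t <= s)%nat -> Q s j -> inNil E sel s i l j -> Q s.+1 i) ->
  forall i, Q (t + N * Tu)%nat i.
Proof. exact: (@reach N B E sel l Tu HE (fun i t => HTu i t l)). Qed.

Lemma spread_abs (V : nat -> 'I_N -> R) t i j : Rabs (V t i - V t j) <= Dsp i0 V t.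
Proof.
rewrite /Dsp /Mx /Mn.
have := fmax_ge i0 (V t) i; have := fmax_ge i0 (V t) j.
have := fmin_le i0 (V t) i; have := fmin_le i0 (V t) j.
move=> h1 h2 h3 h4; apply: Rabs_le; lra.
Qed.

Lemma bigR_sub (I : finType) (F G : I -> R) :
  \big[Rplus/0]_i (F i - G i) = \big[Rplus/0]_i F i - \big[Rplus/0]_i G i.
Proof.
have -> : \big[Rplus/0]_i (F i - G i) = \big[Rplus/0]_i (F i + (-1) * G i).
  by apply: eq_bigr => i _; ring.
by rewrite big_split /= -bigR_scal; ring.
Qed.

Lemma y_sum t l k :
  \big[Rplus/0]_(i < N) (phi t i l * y t i l k) = \big[Rplus/0]_(i < N) gf i (x t i) l k.
Proof.
elim: t => [|t IH].
  by apply: eq_bigr => i _; rewrite Hphi0 Hy0; ring.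
pose X j := phi t j l * y t j l k + gf j (x t.+1 j) l k - gf j (x t j) l k.
rewrite (eq_bigr (fun i => \big[Rplus/0]_(j < N) (a t l i j * X j))); last first.
  move=> i _; rewrite Hy bigR_scal.
  rewrite (bigR_mkcond0 (F := fun j => a t l i j * X j)); last first.
    by move=> j Hj; rewrite Ha_zero // Rmult_0_l.
  rewrite big_mkcond /=; apply: eq_bigr => j _; case: ifP => Hj.
    rewrite /X; field; have := phi_pos t.+1 i l; lra.
  by rewrite Ha_zero ?Hj // Rmult_0_l.
rewrite exchange_big /=.
rewrite (eq_bigr (fun j => X j)); last first.
  by move=> j _; rewrite -bigR_scalr Ha_col Rmult_1_l.
rewrite /X (eq_bigr (fun j => (phi t j l * y t j l k - gf j (x t j) l k) + gf j (x t.+1 j) l k)); last first.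
  by move=> j _; ring.
rewrite big_split bigR_sub IH /=; ring.
Qed.

Lemma G_ex : exists G, 0 <= G /\ forall i z, inK K z -> normP (gf i z) <= G.
Proof.
have [G HG] := @fin_boundR _ (fun i M => forall z, inK K z -> normP (gf i z) <= M)
  (fun i M M' HMM H z Hz => Rle_trans _ _ _ (H z Hz) HMM) Hfb.
exists (Rmax G 0); split; first by apply: Rmax_r.
by move=> i z Hz; apply: Rle_trans (HG i z Hz) (Rmax_l _ _).
Qed.

Section WithG.
Variable G : R.
Hypothesis HG0 : 0 <= G.
Hypothesis HG : forall i z, inK K z -> normP (gf i z) <= G.

Lemma gf_abs i t l k : Rabs (gf i (x t i) l k) <= G.
Proof. by apply: Rle_trans (abs_le_normP _ _ _) (HG i (x_inK t i)). Qed.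

Definition ey s l k j := (gf j (x s.+1 j) l k - gf j (x s j) l k) / phi s j l.

Lemma y_dyn s i l k : y s.+1 i l k =
  \big[Rplus/0]_(j < N | inNil E sel s i l j) (wgt s l i j * (y s j l k + ey s l k j)).
Proof.
rewrite Hy; apply: eq_bigr => j _; rewrite /wgt /ey.
field; split; [have := phi_pos s j l|have := phi_pos s.+1 i l]; lra.
Qed.

Lemma ey_bound s l k j : Rabs (ey s l k j) <= 2 * G / eta.
Proof.
rewrite /ey /Rdiv Rabs_mult.
have Hp := phi_pos s j l; have He := eta_pos.
rewrite (Rabs_pos_eq (/ phi s j l)); last by apply: Rlt_le; apply: Rinv_0_lt_compat.
have h1 : Rabs (gf j (x s.+1 j) l k - gf j (x s j) l k) <= 2 * G.
  have := Rabs_triang (gf j (x s.+1 j) l k) (- gf j (x s j) l k).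
  rewrite Rabs_Ropp /Rminus; have := gf_abs j s.+1 l k; have := gf_abs j s l k; lra.
apply: Rmult_le_compat => //.
- exact: Rabs_pos.
- by apply: Rlt_le; apply: Rinv_0_lt_compat.
- by apply: Rinv_le_contravar => //; apply: phi_lb.
Qed.

Lemma rho_bounds : 0 < epsw ^ (N * Tu) <= 1.
Proof.
have := epsw_bounds => He; split; first by apply: pow_lt; lra.
by apply: pow_le_one; lra.
Qed.

Lemma Dy_bounded l k : exists Kb, forall t, Dsp i0 (fun s i => y s i l k) t <= Kb.
Proof.
have Hw1 := fun s i => wgt_sum s l i.
have Hweps := fun s i j (H : inNil E sel s i l j) => wgt_lb H.
have Hv := fun s i => y_dyn s i l k.
have He := fun s j => ey_bound s l k j.
have Hstep := @Dsp_step N i0 (fun s i j => inNil E sel s i l j) (fun s i j => wgt s l i j)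
  (fun s i => y s i l k) (fun s j => ey s l k j) (fun _ => 2 * G / eta) epsw
  Hw1 Hweps epsw_bounds Hv He.
have Hwin := @Dsp_window N i0 (fun s i j => inNil E sel s i l j) (fun s i j => wgt s l i j)
  (fun s i => y s i l k) (fun s j => ey s l k j) (fun _ => 2 * G / eta) epsw (N * Tu)
  Hw1 Hweps epsw_bounds Hv He (@reachT l).
have Hc : 0 <= 2 * G / eta by apply: Rle_mult_inv_pos; [lra|apply: eta_pos].
apply: (bnd_rec (c := 2 * (2 * G / eta)) (c' := 2 * (INR (N * Tu) * (2 * G / eta)))
  (rho := epsw ^ (N * Tu)) (T0 := (N * Tu)%nat)).
- exact: rho_bounds.
- lra.
- by have := pos_INR (N * Tu); nra.
- exact: Dsp_ge0.
- exact: Hstep.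
- by move=> t; have := Hwin t; rewrite /Sb sum_const_ord.
Qed.

Lemma y_bounded : exists Ky, forall t i l k, Rabs (y t i l k) <= Ky.
Proof.
have Hlk : forall l, exists M, forall k t, Dsp i0 (fun s i => y s i l k) t <= M.
  move=> l.
  apply: (@fin_boundR _ (fun k M => forall t, Dsp i0 (fun s i => y s i l k) t <= M)).
    by move=> k M M' HMM H t; apply: Rle_trans (H t) HMM.
  exact: Dy_bounded.
have [Kb HKb] := @fin_boundR _ (fun l M => forall k t, Dsp i0 (fun s i => y s i l k) t <= M)
  (fun l M M' HMM H k t => Rle_trans _ _ _ (H k t) HMM) Hlk.
exists (Kb + G) => t i l k.
have Hav := @avg_close N (fun j => phi t j l) (fun j => y t j l k)
  (Dsp i0 (fun s i => y s i l k) t) i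
  (fun j => Rlt_le _ _ (phi_pos t j l)) (phi_sum t l) INR_N_pos
  (fun j => spread_abs (fun s i => y s i l k) t i j).
rewrite /= y_sum in Hav.
have Hg : Rabs (/ INR N * \big[Rplus/0]_(j < N) gf j (x t j) l k) <= G.
  rewrite Rabs_mult Rabs_pos_eq; last by apply: Rlt_le; apply: Rinv_0_lt_compat; apply: INR_N_pos.
  apply: Rle_trans (_ : / INR N * \big[Rplus/0]_(j < N) G <= _).
    apply: Rmult_le_compat_l; first by apply: Rlt_le; apply: Rinv_0_lt_compat; apply: INR_N_pos.
    apply: Rle_trans (bigR_abs _ _ _) _.
    by apply: bigR_le => j _; apply: gf_abs.
  rewrite sum_const_ord; right; field; have := INR_N_pos; lra.
have := Rabs_triang (y t i l k - / INR N * \big[Rplus/0]_(j < N) gf j (x t j) l k)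
  (/ INR N * \big[Rplus/0]_(j < N) gf j (x t j) l k).
have -> : y t i l k - / INR N * \big[Rplus/0]_(j < N) gf j (x t j) l k +
  / INR N * \big[Rplus/0]_(j < N) gf j (x t j) l k = y t i l k by ring.
have := HKb l k t; lra.
Qed.

Lemma Mr_ex : exists Mr, 0 <= Mr /\
  forall l z g, K l z -> is_subgradient (r l) z g -> normd g <= Mr.
Proof.
have [M HM] := @fin_boundR _ (fun l M => forall z g, K l z -> is_subgradient (r l) z g -> normd g <= M)
  (fun l M M' HMM H z g Hz Hg => Rle_trans _ _ _ (H z g Hz Hg) HMM) (fun l => proj2 (Hr l)).
exists (Rmax M 0); split; first by apply: Rmax_r.
by move=> l z g Hz Hg; apply: Rle_trans (HM l z g Hz Hg) (Rmax_l _ _).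
Qed.

Section WithY.
Variables (Ky Mr : R).
Hypothesis HKy : forall t i l k, Rabs (y t i l k) <= Ky.
Hypothesis HMr0 : 0 <= Mr.
Hypothesis HMr : forall l z g, K l z -> is_subgradient (r l) z g -> normd g <= Mr.

Lemma dxt_bound t i :
  normd (subd (xt t i) (x t i (sel t i))) <= 4 * (INR d * (INR N * Ky) + 1 + Mr) / tau i.
Proof.
set l := sel t i.
have Hxi := x_inK t i.
have [Kxt Hopt] := Hxt t i.
have Hopt' := Hopt (x t i l) (Hxi l).
rewrite /fhat -/l in Hopt'.
have := @dx_bound d (K l) (fun z => ft i l z (x t i)) (fun z => gft i l z (x t i)) (tau i)
  (r l) Mr (subd (scald (INR N) (y t i l)) (gf i (x t i) l)) (xt t i) (x t i l)
  (Htau i) (@Hft_C1 i l (x t i) Hxi) (@Hft_sc i l (x t i) Hxi) (proj1 (Hr l)) (HMr (l:=l)) Kxt (Hxi l) Hopt'.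
move=> Hb; apply: Rle_trans Hb _.
apply: Rmult_le_compat_r; first by apply: Rlt_le; apply: Rinv_0_lt_compat.
apply: Rmult_le_compat_l; first lra.
apply: Rplus_le_compat_r; apply: Rplus_le_compat_r.
apply: Rle_trans (normd_le_sum _) _.
rewrite -sum_const_ord; apply: bigR_le => k _.
rewrite Hft_grad // /subd /scald.
have -> : gf i (x t i) l k + (INR N * y t i l k - gf i (x t i) l k) = INR N * y t i l k by ring.
rewrite Rabs_mult Rabs_pos_eq; last by apply: pos_INR.
by apply: Rmult_le_compat_l; [apply: pos_INR|apply: HKy].
Qed.

Lemma Mb_ex : exists Mb, 0 <= Mb /\ forall t j l k, Rabs (dx sel x xt t j l k) <= Mb.
Proof.
have Hex : forall i, exists M, forall t, normd (subd (xt t i) (x t i (sel t i))) <= M.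
  by move=> i; eexists => t; apply: dxt_bound.
have [M HM] := @fin_boundR _ (fun i M => forall t, normd (subd (xt t i) (x t i (sel t i))) <= M)
  (fun i M M' HMM H t => Rle_trans _ _ _ (H t) HMM) Hex.
exists (Rmax M 0); split; first by apply: Rmax_r.
move=> t j l k; rewrite /dx; case: eqP => [->|_].
  apply: Rle_trans (abs_le_normd _ k) _.
  by apply: Rle_trans (HM j t) (Rmax_l _ _).
by rewrite Rabs_R0; apply: Rmax_r.
Qed.

Section WithMb.
Variable Mb : R.
Hypothesis HMb0 : 0 <= Mb.
Hypothesis HMb : forall t j l k, Rabs (dx sel x xt t j l k) <= Mb.

Definition Dxl l k t := Dsp i0 (fun s i => x s i l k) t.
Definition T0 := (N * Tu)%nat.
Definition rho := epsw ^ T0.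
Definition cst := INR B * (INR d * (2 * (INR T0 * Mb))).

Lemma gamma_decr t u : gamma (t + u)%nat <= gamma t.
Proof.
elim: u => [|u IH]; first by rewrite addn0; lra.
by rewrite addnS; apply: Rle_trans (Hg_dec _) IH.
Qed.

Lemma Dxl_window l k t : Dxl l k (t + T0)%nat <= (1 - rho) * Dxl l k t + 2 * (INR T0 * Mb) * gamma t.
Proof.
have Hw1 := fun s i => wgt_sum s l i.
have Hweps := fun s i j (H : inNil E sel s i l j) => wgt_lb H.
have Hv : forall s i, x s.+1 i l k = \big[Rplus/0]_(j < N | inNil E sel s i l j)
    (wgt s l i j * (x s j l k + gamma s * dx sel x xt s j l k)) by move=> s i; rewrite Hx.
have He : forall s j, Rabs (gamma s * dx sel x xt s j l k) <= gamma s * Mb.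
  move=> s j; rewrite Rabs_mult Rabs_pos_eq; last by have := Hg_pos s; lra.
  by apply: Rmult_le_compat_l; [have := Hg_pos s; lra|apply: HMb].
have := @Dsp_window N i0 (fun s i j => inNil E sel s i l j) (fun s i j => wgt s l i j)
  (fun s i => x s i l k) (fun s j => gamma s * dx sel x xt s j l k) (fun s => gamma s * Mb)
  epsw (N * Tu) Hw1 Hweps epsw_bounds Hv He (@reachT l) t.
rewrite -/(Dxl l k _) -/(Dxl l k t) -/T0 -/rho => H; apply: Rle_trans H _.
apply: Rplus_le_compat_l.
have : Sb (fun s => gamma s * Mb) t T0 <= INR T0 * Mb * gamma t.
  rewrite /Sb.
  apply: Rle_trans (_ : \big[Rplus/0]_(u < T0) (gamma t * Mb) <= _).
    by apply: bigR_le => u _; apply: Rmult_le_compat_r => //; apply: gamma_decr.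
  by rewrite sum_const_ord; right; ring.
lra.
Qed.

Definition Dtot t := \big[Rplus/0]_(l < B) \big[Rplus/0]_(k < d) Dxl l k t.

Lemma Dtot_ge0 t : 0 <= Dtot t.
Proof. by apply: bigR_ge0 => l _; apply: bigR_ge0 => k _; apply: Dsp_ge0. Qed.

Lemma Dtot_window t : Dtot (t + T0)%nat <= (1 - rho) * Dtot t + cst * gamma t.
Proof.
rewrite /Dtot.
apply: Rle_trans (_ : \big[Rplus/0]_(l < B) \big[Rplus/0]_(k < d)
  ((1 - rho) * Dxl l k t + 2 * (INR T0 * Mb) * gamma t) <= _).
  by apply: bigR_le => l _; apply: bigR_le => k _; apply: Dxl_window.
rewrite bigR_scal /cst.
right.
rewrite (eq_bigr (fun l => (1 - rho) * \big[Rplus/0]_(k < d) Dxl l k t + INR d * (2 * (INR T0 * Mb) * gamma t))); last first.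
  by move=> l _; rewrite big_split /= sum_const_ord bigR_scal.
rewrite big_split /= sum_const_ord; ring.
Qed.

Lemma normP_le_Dtot t i : normP (subP (x t i) (sbar phi x t)) <= Dtot t.
Proof.
apply: Rle_trans (normP_le_sum _) _.
apply: bigR_le => l _; apply: bigR_le => k _.
rewrite /subP /sbar /Dxl.
exact: (@avg_close N (fun j => phi t j l) (fun j => x t j l k)
  (Dsp i0 (fun s i => x s i l k) t) i
  (fun j => Rlt_le _ _ (phi_pos t j l)) (phi_sum t l) INR_N_pos
  (fun j => spread_abs (fun s i => x s i l k) t i j)).
Qed.

Lemma T0_pos : (0 < T0)%nat.
Proof. by rewrite /T0 muln_gt0 HN HTu0. Qed.

Lemma final_i i :
  Un_cv (fun t => normP (subP (x t i) (sbar phi x t))) 0 /\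
  (exists s, Un_cv (psum (fun t => gamma t * normP (subP (x t i) (sbar phi x t)))) s) /\
  (exists s, Un_cv (psum (fun t => normP (subP (x t i) (sbar phi x t)) ^ 2)) s).
Proof.
have [s2 Hs2] := Hg_sq.
have Hg2 : forall n, psum (fun t => gamma t ^ 2) n <= s2.
  by move=> n; apply: (cv_bound n (fun t => pow2_ge_0 _) Hs2).
have Hrho : 0 < rho <= 1 by exact: rho_bounds.
have Hcst : 0 <= cst.
  rewrite /cst; have := pos_INR B; have := pos_INR d; have := pos_INR T0.
  move=> h1 h2 h3; apply: Rmult_le_pos => //; apply: Rmult_le_pos => //; nra.
have HT0 : T0 = (T0.-1).+1 by have := T0_pos; lia.
have Hgam := Hg_pos.
have S1 : exists s, Un_cv (psum (fun t => gamma t * Dtot t)) s.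
  apply: (@sum_rec _ (fun t => cst * gamma t ^ 2) T0.-1 rho (cst * s2)) => //.
  - by move=> t; apply: Rmult_le_pos; [have := Hgam t; lra|apply: Dtot_ge0].
  - by move=> t; apply: Rmult_le_pos => //; apply: pow2_ge_0.
  - by move=> n; rewrite psum_scal; apply: Rmult_le_compat_l.
  - move=> t; rewrite -HT0.
    have h1 := Dtot_window t; have h2 := gamma_decr t T0; have h3 := Dtot_ge0 (t + T0).
    have h4 := Hgam (t + T0)%nat; have h5 := Hgam t.
    have : gamma (t + T0)%nat * Dtot (t + T0)%nat <= gamma t * Dtot (t + T0)%nat.
      by apply: Rmult_le_compat_r.
    have : gamma t * Dtot (t + T0)%nat <= gamma t * ((1 - rho) * Dtot t + cst * gamma t).
      by apply: Rmult_le_compat_l; lra.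
    rewrite /= Rmult_1_r; lra.
have S2 : exists s, Un_cv (psum (fun t => Dtot t ^ 2)) s.
  apply: (@sum_rec _ (fun t => (cst * cst / rho) * gamma t ^ 2) T0.-1 rho ((cst * cst / rho) * s2)) => //.
  - by move=> t; apply: pow2_ge_0.
  - move=> t; apply: Rmult_le_pos; last by apply: pow2_ge_0.
    by apply: Rle_mult_inv_pos; [nra|lra].
  - move=> n; rewrite psum_scal; apply: Rmult_le_compat_l => //.
    by apply: Rle_mult_inv_pos; [nra|lra].
  - move=> t; rewrite -HT0.
    have h1 := Dtot_window t; have h3 := Dtot_ge0 (t + T0); have h0 := Dtot_ge0 t.
    have h5 := Hgam t.
    have hsq : Dtot (t + T0)%nat ^ 2 <= ((1 - rho) * Dtot t + cst * gamma t) ^ 2.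
      by apply: pow_incr; lra.
    apply: Rle_trans hsq _.
    set A := Dtot t; set b := cst * gamma t.
    have hb : 0 <= b by rewrite /b; nra.
    have key : rho * ((1 - rho) * A ^ 2 + cst * cst / rho * gamma t ^ 2 - ((1 - rho) * A + b) ^ 2)
       = (1 - rho) * (rho * A - b) ^ 2.
      rewrite /b; field; lra.
    have : 0 <= (1 - rho) * (rho * A - b) ^ 2 by apply: Rmult_le_pos; [lra|apply: pow2_ge_0].
    rewrite -key => hk.
    have : 0 <= (1 - rho) * A ^ 2 + cst * cst / rho * gamma t ^ 2 - ((1 - rho) * A + b) ^ 2.
      apply: (Rmult_le_reg_l rho); first lra.
      by rewrite Rmult_0_r.
    lra.
have Hu0 : forall t, 0 <= normP (subP (x t i) (sbar phi x t)) by move=> t; apply: normP_ge0.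
have Hu : forall t, normP (subP (x t i) (sbar phi x t)) <= Dtot t by move=> t; apply: normP_le_Dtot.
have C3 : exists s, Un_cv (psum (fun t => normP (subP (x t i) (sbar phi x t)) ^ 2)) s.
  apply: (compare_cv (v := fun t => Dtot t ^ 2)) => //.
  - by move=> t; cbv beta; apply: pow2_ge_0.
  - by move=> t; cbv beta; apply: pow_incr; split; [apply: Hu0|apply: Hu].
split; last split => //.
- have [s3 Hs3] := C3.
  have H0 := cv_terms0 Hs3.
  move=> e He.
  have [N0 HN0] := H0 (e * e) (ltac:(nra)).
  exists N0 => n Hn; have h := HN0 n Hn.
  rewrite /R_dist Rminus_0_r in h *; cbv beta in h |- *.
  rewrite Rabs_pos_eq in h; last by apply: pow2_ge_0.
  rewrite Rminus_0_r Rabs_pos_eq; last by apply: Hu0.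
  have := Hu0 n; rewrite /= Rmult_1_r in h; nra.
- apply: (compare_cv (v := fun t => gamma t * Dtot t)) => //.
  + by move=> t; apply: Rmult_le_pos; [have := Hgam t; lra|apply: Hu0].
  + by move=> t; apply: Rmult_le_compat_l; [have := Hgam t; lra|apply: Hu].
Qed.

End WithMb.
End WithY.
End WithG.
End WithT.
End Main.


Unset Implicit Arguments.
Set Strict Implicit.

Theorem mainTheorem5
  (d B N : nat) (Hd : (0 < d)%nat) (HB : (0 < B)%nat) (HN : (0 < N)%nat)
  (* constraint sets *)
  (K : 'I_B -> blk d -> Prop)
  (HK : forall l, (exists u, K l u) /\ is_closed dotd subd (K l) /\ convex_set (K l))
  (* smooth parts *)
  (f : 'I_N -> pt d B -> R) (gf : 'I_N -> pt d B -> pt d B) (L : 'I_N -> R)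
  (Hf : forall i, C1_near dotP subP (inK K) (f i) (gf i))
  (HfL : forall i x y, inK K x -> inK K y ->
           normP (subP (gf i x) (gf i y)) <= L i * normP (subP x y))
  (Hfb : forall i, exists M, forall x, inK K x -> normP (gf i x) <= M)
  (* nonsmooth parts *)
  (r : 'I_B -> blk d -> R)
  (Hr : forall l, convex_fun (r l) /\ bounded_subgradients_on (K l) (r l))
  (* coercivity of U on K *)
  (HU : forall M, exists rho, forall x, inK K x -> rho <= normP x -> M <= Uobj f r x)
  (* network: E j i <-> (j,i) is an edge *)
  (E : rel 'I_N) (HE : strongly_connected E) (Hloop : forall i, E i i)
  (* block selection *)
  (sel : nat -> 'I_N -> 'I_B)
  (Hsel : forall i, exists T, (0 < T)%nat /\
            forall t (l : 'I_B), exists tau, (tau < T)%nat /\ sel (t + tau)%nat i = l)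
  (* weights a t l i j = a_{ij l}^t *)
  (kappa : R) (a : nat -> 'I_B -> 'I_N -> 'I_N -> R) (Hkappa : 0 < kappa)
  (Ha_pos : forall t l i j, inNil E sel t i l j -> kappa < a t l i j)
  (Ha_zero : forall t l i j, ~~ inNil E sel t i l j -> a t l i j = 0)
  (Ha_col : forall t l j, \big[Rplus/0]_(i < N) a t l i j = 1)
  (* surrogates ft i l z x = \tilde f_{i,l}(z; x), with gradient gft in z *)
  (ft : 'I_N -> 'I_B -> blk d -> pt d B -> R)
  (gft : 'I_N -> 'I_B -> blk d -> pt d B -> blk d) (tau : 'I_N -> R)
  (Htau : forall i, 0 < tau i)
  (Hft_C1 : forall i l x, inK K x ->
     C1_near dotd subd (K l) (fun z => ft i l z x) (fun z => gft i l z x))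
  (Hft_sc : forall i l x, inK K x ->
     strongly_convex_on (K l) (tau i) (fun z => ft i l z x))
  (Hft_grad : forall i l x, inK K x -> forall k, gft i l (x l) x k = gf i x l k)
  (Hft_lip : forall i l, exists Lt, forall z x y, K l z -> inK K x -> inK K y ->
     normd (subd (gft i l z x) (gft i l z y)) <= Lt * normP (subP x y))
  (* step sizes *)
  (gamma : nat -> R)
  (Hg_pos : forall t, 0 < gamma t <= 1)
  (Hg_dec : forall t, gamma (S t) <= gamma t)
  (Hg_div : cv_infty (psum gamma))
  (Hg_sq : exists s, Un_cv (psum (fun t => gamma t ^ 2)) s)
  (* the algorithm: x t i = x_{(i,:)}^t, y t i = y_{(i,:)}^t, phi t i l = phi_{(i,l)}^t,
     xt t i = \tilde x_{(i, l_i^t)}^t *)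
  (x y : nat -> 'I_N -> pt d B) (phi : nat -> 'I_N -> 'I_B -> R)
  (xt : nat -> 'I_N -> blk d)
  (Hx0 : forall i, inK K (x 0%nat i))
  (Hy0 : forall i l k, y 0%nat i l k = gf i (x 0%nat i) l k)
  (Hphi0 : forall i l, phi 0%nat i l = 1)
  (Hxt : forall t i,
     K (sel t i) (xt t i) /\
     forall z, K (sel t i) z ->
       fhat ft gf i (sel t i) (xt t i) (x t i) (y t i (sel t i)) + r (sel t i) (xt t i)
       <= fhat ft gf i (sel t i) z (x t i) (y t i (sel t i)) + r (sel t i) z)
  (Hphi : forall t i l,
     phi (S t) i l = \big[Rplus/0]_(j < N | inNil E sel t i l j) (a t l i j * phi t j l))
  (Hx : forall t i l k,
     x (S t) i l k = \big[Rplus/0]_(j < N | inNil E sel t i l j)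
        (a t l i j * phi t j l / phi (S t) i l *
           (x t j l k + gamma t * dx sel x xt t j l k)))
  (Hy : forall t i l k,
     y (S t) i l k = \big[Rplus/0]_(j < N | inNil E sel t i l j)
        (a t l i j / phi (S t) i l *
           (phi t j l * y t j l k + gf j (x (S t) j) l k - gf j (x t j) l k))) :
  forall i : 'I_N,
    Un_cv (fun t => normP (subP (x t i) (sbar phi x t))) 0 /\
    (exists s, Un_cv (psum (fun t => gamma t * normP (subP (x t i) (sbar phi x t)))) s) /\
    (exists s, Un_cv (psum (fun t => normP (subP (x t i) (sbar phi x t)) ^ 2)) s).

Proof.
move=> i.
have [Tu [HTu0 HTu]] : exists Tu, (0 < Tu)%nat /\
    forall i t l, exists tau, (tau < Tu)%nat /\ sel (t + tau)%nat i = l.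
  have [Tu HTu] := @fin_boundN _
    (fun i T => (0 < T)%nat /\ forall t (l : 'I_B), exists tau, (tau < T)%nat /\ sel (t + tau)%nat i = l)
    (fun i M M' HMM '(conj H0 H) => conj (leq_trans H0 HMM)
       (fun t l => let: ex_intro tau (conj h1 h2) := H t l in
          ex_intro _ tau (conj (leq_trans h1 HMM) h2))) Hsel.
  exists Tu; split; first exact: (proj1 (HTu i)).
  by move=> j t l; apply: (proj2 (HTu j)).
have [G [HG0 HG]] := G_ex Hfb.
have [Ky HKy] : exists Ky, forall t i l k, Rabs (y t i l k) <= Ky.
  by eapply y_bounded; eassumption.
have [Mr [HMr0 HMr]] := Mr_ex Hr.
have [Mb [HMb0 HMb]] : exists Mb, 0 <= Mb /\ forall t j l k, Rabs (dx sel x xt t j l k) <= Mb.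
  by eapply Mb_ex; eassumption.
by eapply final_i; eassumption.
Qed.
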